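(* Consider the scheme with the classical entropy $f(\rho)=\rho(\ln\rho-1)$. Let $\rho^{n-1},\rho^n,\phi^n\in\mathcal C$ with $\min_{i,j,k}\rho^n_{i,j,k}>0$. Then there exists a unique pair $(\rho^{n+1},\phi^{n+1})\in\mathcal C\times\mathcal C$ with $\rho^{n+1}_{i,j,k}>0$ for all $i,j,k=1,\dots,N$ solving the scheme.
   Context: Grid setting: $\Omega=(a,b)^3$, $N\in\mathbb N$, $h=(b-a)/N$, cell centers $(x_i,y_j,z_k)=(a+(i-\tfrac12)h,a+(j-\tfrac12)h,a+(k-\tfrac12)h)$, $1\le i,j,k\le N$. $\mathcal C$ is the space of cell-centered grid functions $u_{i,j,k}$, extended to ghost points by the discrete homogeneous Neumann condition $u_{0,j,k}=u_{1,j,k}$, $u_{N+1,j,k}=u_{N,j,k}$ (and likewise in $j$ and $k$). Operators: $D_xf_{i+1/2,j,k}=(f_{i+1,j,k}-f_{i,j,k})/h$, $A_xf_{i+1/2,j,k}=(f_{i+1,j,k}+f_{i,j,k})/2$; for face-centered $g$, $d_xg_{i,j,k}=(g_{i+1/2,j,k}-g_{i-1/2,j,k})/h$; analogously in $y,z$. $\nabla_hf=(D_xf,D_yf,D_zf)$, $\Delta_hf=d_xD_xf+d_yD_yf+d_zD_zf$, and for cell-centered $\mathcal D$, $\nabla_h\cdot(\mathcal D\nabla_hf):=d_x(A_x\mathcal D\,D_xf)+d_y(A_y\mathcal D\,D_yf)+d_z(A_z\mathcal D\,D_zf)$. Scheme (classical case: $f'(\rho)=\ln\rho$, $1/f''(\rho)=\rho$,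 $f'''(\rho)=-1/\rho^2$): parameters $\gamma,\mu,\alpha,\chi,\theta>0$, $\Delta t>0$. With $\hat\rho^{n+\frac12}=\big((\tfrac32\rho^n-\tfrac12\rho^{n-1})^2+\Delta t^8\big)^{1/2}$ pointwise, find $\rho^{n+1},\phi^{n+1}\in\mathcal C$ with $$\frac{\rho^{n+1}-\rho^n}{\Delta t}=\nabla_h\cdot\Big[\hat\rho^{n+\frac12}\nabla_h\Big(\gamma S^{n+\frac12}-\frac\chi2(\phi^{n+1}+\phi^n)+\frac{\chi^2\Delta t}{4\theta}(\rho^{n+1}-\rho^n)\Big)\Big],$$ $$\theta\frac{\phi^{n+1}-\phi^n}{\Delta t}=\frac\mu2\Delta_h(\phi^{n+1}+\phi^n)-\frac\alpha2(\phi^{n+1}+\phi^n)+\frac\chi2(\rho^{n+1}+\rho^n),$$ where $S^{n+\frac12}=\ln\rho^{n+1}-\frac{\rho^{n+1}-\rho^n}{2\rho^{n+1}}-\frac{(\rho^{n+1}-\rho^n)^2}{6(\rho^{n+1})^2}$ pointwise. *)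

(* Defs.v *)
From Stdlib Require Import Reals Lra Lia.
Open Scope R_scope.

(* A cell-centered grid function; only the values at indices 1..N in each
   direction are meaningful (the space C). *)
Definition grid := nat -> nat -> nat -> R.

Definition in_grid (N i : nat) : Prop := (1 <= i <= N)%nat.

(* index clamping: realises the discrete homogeneous Neumann ghost values
   u_0 = u_1, u_{N+1} = u_N *)
Definition cl (N i : nat) : nat := Nat.max 1 (Nat.min N i).

Definition gext (N : nat) (u : grid) : grid :=
  fun i j k => u (cl N i) (cl N j) (cl N k).

Definition divDgrad (N : nat) (h : R) (D f : grid) (i j k : nat) : R :=
  let D' := gext N D in
  let f' := gext N f in
  ((D' (S i) j k + D' i j k) / 2 * ((f' (S i) j k - f' i j k) / h)
   - (D' i j k + D' (i - 1)%nat j k) / 2 * ((f' i j k - f' (i - 1)%nat j k) / h)) / h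
+ ((D' i (S j) k + D' i j k) / 2 * ((f' i (S j) k - f' i j k) / h)
   - (D' i j k + D' i (j - 1)%nat k) / 2 * ((f' i j k - f' i (j - 1)%nat k) / h)) / h
+ ((D' i j (S k) + D' i j k) / 2 * ((f' i j (S k) - f' i j k) / h)
   - (D' i j k + D' i j (k - 1)%nat) / 2 * ((f' i j k - f' i j (k - 1)%nat) / h)) / h.

Definition lap (N : nat) (h : R) (f : grid) (i j k : nat) : R :=
  let f' := gext N f in
  ((f' (S i) j k - f' i j k) / h - (f' i j k - f' (i - 1)%nat j k) / h) / h
+ ((f' i (S j) k - f' i j k) / h - (f' i j k - f' i (j - 1)%nat k) / h) / h
+ ((f' i j (S k) - f' i j k) / h - (f' i j k - f' i j (k - 1)%nat) / h) / h.

Definition mesh (a b : R) (N : nat) : R := (b - a) / INR N.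

Definition rhohat (dt : R) (rho_prev rho_n : grid) : grid :=
  fun i j k => sqrt ((3/2 * rho_n i j k - 1/2 * rho_prev i j k) ^ 2 + dt ^ 8).

(* S^{n+1/2}, classical entropy f(rho) = rho (ln rho - 1) *)
Definition Shalf (rho_n rho1 : grid) : grid :=
  fun i j k =>
    ln (rho1 i j k) - (rho1 i j k - rho_n i j k) / (2 * rho1 i j k)
    - (rho1 i j k - rho_n i j k) ^ 2 / (6 * (rho1 i j k) ^ 2).

Definition potential (gamma chi theta dt : R) (rho_n phi_n rho1 phi1 : grid) : grid :=
  fun i j k =>
    gamma * Shalf rho_n rho1 i j k - chi / 2 * (phi1 i j k + phi_n i j k)
    + chi ^ 2 * dt / (4 * theta) * (rho1 i j k - rho_n i j k).

Definition scheme (a b : R) (N : nat) (gamma mu alpha chi theta dt : R)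
    (rho_prev rho_n phi_n rho1 phi1 : grid) : Prop :=
  let h := mesh a b N in
  forall i j k, in_grid N i -> in_grid N j -> in_grid N k ->
    (rho1 i j k - rho_n i j k) / dt
      = divDgrad N h (rhohat dt rho_prev rho_n)
          (potential gamma chi theta dt rho_n phi_n rho1 phi1) i j k
    /\
    theta * ((phi1 i j k - phi_n i j k) / dt)
      = mu / 2 * lap N h (fun i j k => phi1 i j k + phi_n i j k) i j k
        - alpha / 2 * (phi1 i j k + phi_n i j k)
        + chi / 2 * (rho1 i j k + rho_n i j k).

Definition grid_pos (N : nat) (u : grid) : Prop :=
  forall i j k, in_grid N i -> in_grid N j -> in_grid N k -> 0 < u i j k.

Definition grid_eq (N : nat) (u v : grid) : Prop :=
  forall i j k, in_grid N i -> in_grid N j -> in_grid N k -> u i j k = v i j k.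

(* Main.v *)
Require Import Defs.
From Stdlib Require Import Reals Lra Lia Classical ClassicalEpsilon List ZArith FunctionalExtensionality.
From Coquelicot Require Coquelicot.
Open Scope R_scope.

Fixpoint sumN (n : nat) (f : nat -> R) : R :=
  match n with O => 0 | S n' => sumN n' f + f (S n') end.

Definition sum3 (N : nat) (g : grid) : R :=
  sumN N (fun i => sumN N (fun j => sumN N (fun k => g i j k))).

Lemma sumN_ext n f g : (forall i, (1 <= i <= n)%nat -> f i = g i) -> sumN n f = sumN n g.
Proof.
  induction n; simpl; intros H; auto.
  rewrite IHn by (intros; apply H; lia). rewrite H by lia. auto.
Qed.

Lemma sumN_plus n f g : sumN n (fun i => f i + g i) = sumN n f + sumN n g.
Proof. induction n; simpl; [lra|rewrite IHn; lra]. Qed.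

Lemma sumN_minus n f g : sumN n (fun i => f i - g i) = sumN n f - sumN n g.
Proof. induction n; simpl; [lra|rewrite IHn; lra]. Qed.

Lemma sumN_scal n c f : sumN n (fun i => c * f i) = c * sumN n f.
Proof. induction n; simpl; [lra|rewrite IHn; lra]. Qed.

Lemma sumN_const n c : sumN n (fun _ => c) = INR n * c.
Proof. induction n; simpl sumN; [simpl; lra|rewrite IHn, S_INR; lra]. Qed.

Lemma sumN_zero n : sumN n (fun _ => 0) = 0.
Proof. rewrite sumN_const; lra. Qed.

Lemma sumN_nonneg n f : (forall i, (1 <= i <= n)%nat -> 0 <= f i) -> 0 <= sumN n f.
Proof.
  induction n; simpl; intros H; [lra|].
  assert (0 <= sumN n f) by (apply IHn; intros; apply H; lia).
  assert (0 <= f (S n)) by (apply H; lia). lra.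
Qed.

Lemma sumN_le n f g : (forall i, (1 <= i <= n)%nat -> f i <= g i) -> sumN n f <= sumN n g.
Proof.
  intros H. assert (0 <= sumN n (fun i => g i - f i)).
  apply sumN_nonneg; intros; specialize (H i H0); lra.
  rewrite sumN_minus in H0; lra.
Qed.

Lemma sumN_ge_term n f i0 : (forall i, (1 <= i <= n)%nat -> 0 <= f i) ->
  (1 <= i0 <= n)%nat -> f i0 <= sumN n f.
Proof.
  induction n; simpl; intros H Hi; [lia|].
  destruct (Nat.eq_dec i0 (S n)).
  - subst. assert (0 <= sumN n f) by (apply sumN_nonneg; intros; apply H; lia). lra.
  - assert (f i0 <= sumN n f) by (apply IHn; [intros; apply H; lia|lia]).
    assert (0 <= f (S n)) by (apply H; lia). lra.
Qed.

Lemma sumN_single n f i0 : (forall i, (1 <= i <= n)%nat -> i <> i0 -> f i = 0) ->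
  (1 <= i0 <= n)%nat -> sumN n f = f i0.
Proof.
  induction n; simpl; intros H Hi; [lia|].
  destruct (Nat.eq_dec i0 (S n)).
  - subst. rewrite (sumN_ext n f (fun _ => 0)). rewrite sumN_zero; lra.
    intros; apply H; lia.
  - rewrite IHn; [rewrite (H (S n)); [lra|lia|lia]|intros; apply H; lia|lia].
Qed.

Lemma sumN_swap n m (f : nat -> nat -> R) :
  sumN n (fun i => sumN m (fun j => f i j)) = sumN m (fun j => sumN n (fun i => f i j)).
Proof.
  induction n; simpl.
  - rewrite sumN_zero; auto.
  - rewrite IHn. rewrite <- sumN_plus. auto.
Qed.

Lemma sumN_deriv n (g : nat -> R -> R) g' t0 :
  (forall i, (1 <= i <= n)%nat -> derivable_pt_lim (g i) t0 (g' i)) ->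
  derivable_pt_lim (fun t => sumN n (fun i => g i t)) t0 (sumN n g').
Proof.
  induction n; simpl; intros H.
  - apply derivable_pt_lim_const.
  - apply (derivable_pt_lim_plus (fun t => sumN n (fun i => g i t)) (g (S n))).
    apply IHn; intros; apply H; lia. apply H; lia.
Qed.

Lemma sumN_cv n (g : nat -> nat -> R) l :
  (forall i, (1 <= i <= n)%nat -> Un_cv (fun m => g i m) (l i)) ->
  Un_cv (fun m => sumN n (fun i => g i m)) (sumN n l).
Proof.
  induction n; simpl; intros H.
  - intros e He; exists O; intros; unfold Rdist; rewrite Rminus_0_r, Rabs_R0; lra.
  - apply CV_plus. apply IHn; intros; apply H; lia. apply H; lia.
Qed.

Lemma sum3_ext N f g : (forall i j k, in_grid N i -> in_grid N j -> in_grid N k -> f i j k = g i j k) ->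
  sum3 N f = sum3 N g.
Proof.
  intros H; unfold sum3. apply sumN_ext; intros i Hi; apply sumN_ext; intros j Hj;
  apply sumN_ext; intros k Hk; apply H; unfold in_grid; auto.
Qed.

Lemma sum3_plus N f g : sum3 N (fun i j k => f i j k + g i j k) = sum3 N f + sum3 N g.
Proof.
  unfold sum3. rewrite <- sumN_plus. apply sumN_ext; intros.
  rewrite <- sumN_plus. apply sumN_ext; intros. rewrite <- sumN_plus. auto.
Qed.

Lemma sum3_minus N f g : sum3 N (fun i j k => f i j k - g i j k) = sum3 N f - sum3 N g.
Proof.
  unfold sum3. rewrite <- sumN_minus. apply sumN_ext; intros.
  rewrite <- sumN_minus. apply sumN_ext; intros. rewrite <- sumN_minus. auto.
Qed.

Lemma sum3_scal N c f : sum3 N (fun i j k => c * f i j k) = c * sum3 N f.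
Proof.
  unfold sum3. rewrite <- sumN_scal. apply sumN_ext; intros.
  rewrite <- sumN_scal. apply sumN_ext; intros. rewrite <- sumN_scal. auto.
Qed.

Lemma sum3_const N c : sum3 N (fun _ _ _ => c) = INR N * (INR N * (INR N * c)).
Proof.
  unfold sum3. rewrite <- sumN_const. apply sumN_ext; intros.
  rewrite <- sumN_const. apply sumN_ext; intros. rewrite sumN_const. auto.
Qed.

Lemma sum3_nonneg N f : (forall i j k, in_grid N i -> in_grid N j -> in_grid N k -> 0 <= f i j k) ->
  0 <= sum3 N f.
Proof.
  intros H; unfold sum3. apply sumN_nonneg; intros i Hi; apply sumN_nonneg; intros j Hj;
  apply sumN_nonneg; intros k Hk; apply H; unfold in_grid; auto.
Qed.

Lemma sum3_le N f g : (forall i j k, in_grid N i -> in_grid N j -> in_grid N k -> f i j k <= g i j k) ->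
  sum3 N f <= sum3 N g.
Proof.
  intros H. assert (0 <= sum3 N (fun i j k => g i j k - f i j k)).
  apply sum3_nonneg; intros; specialize (H i j k H0 H1 H2); lra.
  rewrite sum3_minus in H0; lra.
Qed.

Lemma sum3_ge_term N f i0 j0 k0 :
  (forall i j k, in_grid N i -> in_grid N j -> in_grid N k -> 0 <= f i j k) ->
  in_grid N i0 -> in_grid N j0 -> in_grid N k0 -> f i0 j0 k0 <= sum3 N f.
Proof.
  intros H Hi Hj Hk; unfold sum3.
  assert (A1 : f i0 j0 k0 <= sumN N (fun k => f i0 j0 k)).
  { apply (sumN_ge_term _ (fun k => f i0 j0 k)); auto. all: intros; apply H; unfold in_grid; auto. }
  assert (A2 : sumN N (fun k => f i0 j0 k) <= sumN N (fun j => sumN N (fun k => f i0 j k))).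
  { apply (sumN_ge_term _ (fun j => sumN N (fun k => f i0 j k))); auto.
    all: intros; apply sumN_nonneg; intros; apply H; unfold in_grid; auto. }
  assert (A3 : sumN N (fun j => sumN N (fun k => f i0 j k)) <= sumN N (fun i => sumN N (fun j => sumN N (fun k => f i j k)))).
  { apply (sumN_ge_term _ (fun i => sumN N (fun j => sumN N (fun k => f i j k)))); auto.
    all: intros; apply sumN_nonneg; intros; apply sumN_nonneg; intros; apply H; unfold in_grid; auto. }
  lra.
Qed.

Lemma sum3_deriv N (g : nat -> nat -> nat -> R -> R) g' t0 :
  (forall i j k, in_grid N i -> in_grid N j -> in_grid N k -> derivable_pt_lim (g i j k) t0 (g' i j k)) ->
  derivable_pt_lim (fun t => sum3 N (fun i j k => g i j k t)) t0 (sum3 N g').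
Proof.
  intros H; unfold sum3.
  apply (sumN_deriv N (fun i t => sumN N (fun j => sumN N (fun k => g i j k t)))).
  intros i Hi.
  apply (sumN_deriv N (fun j t => sumN N (fun k => g i j k t))).
  intros j Hj.
  apply (sumN_deriv N (fun k t => g i j k t)).
  intros k Hk. apply H; unfold in_grid; auto.
Qed.

Lemma sum3_cv N (g : nat -> nat -> nat -> nat -> R) l :
  (forall i j k, in_grid N i -> in_grid N j -> in_grid N k -> Un_cv (fun m => g i j k m) (l i j k)) ->
  Un_cv (fun m => sum3 N (fun i j k => g i j k m)) (sum3 N l).
Proof.
  intros H; unfold sum3.
  apply (sumN_cv N (fun i m => sumN N (fun j => sumN N (fun k => g i j k m)))).
  intros i Hi.
  apply (sumN_cv N (fun j m => sumN N (fun k => g i j k m))).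
  intros j Hj.
  apply (sumN_cv N (fun k m => g i j k m)).
  intros k Hk. apply H; unfold in_grid; auto.
Qed.

Definition delta3 (i0 j0 k0 : nat) : grid :=
  fun i j k => if Nat.eq_dec i i0 then if Nat.eq_dec j j0 then if Nat.eq_dec k k0 then 1 else 0 else 0 else 0.

Lemma sum3_delta N i0 j0 k0 (w : grid) :
  in_grid N i0 -> in_grid N j0 -> in_grid N k0 ->
  sum3 N (fun i j k => delta3 i0 j0 k0 i j k * w i j k) = w i0 j0 k0.
Proof.
  intros Hi Hj Hk; unfold sum3.
  rewrite (sumN_single _ _ i0); auto.
  rewrite (sumN_single _ _ j0); auto.
  rewrite (sumN_single _ _ k0); auto.
  unfold delta3; repeat (destruct Nat.eq_dec; try congruence). lra.
  intros; unfold delta3; repeat (destruct Nat.eq_dec; try congruence); lra.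
  intros; rewrite <- (sumN_zero N); apply sumN_ext; intros;
   unfold delta3; repeat (destruct Nat.eq_dec; try congruence); lra.
  intros; rewrite <- (sumN_zero N); apply sumN_ext; intros; rewrite <- (sumN_zero N); apply sumN_ext; intros;
   unfold delta3; repeat (destruct Nat.eq_dec; try congruence); lra.
Qed.

Lemma sum3_delta1 N i0 j0 k0 :
  in_grid N i0 -> in_grid N j0 -> in_grid N k0 -> sum3 N (delta3 i0 j0 k0) = 1.
Proof.
  intros. rewrite <- (sum3_delta N i0 j0 k0 (fun _ _ _ => 1)) by auto.
  apply sum3_ext; intros; lra.
Qed.

Lemma delta3_bound i0 j0 k0 i j k : 0 <= delta3 i0 j0 k0 i j k <= 1.
Proof. unfold delta3; repeat destruct Nat.eq_dec; lra. Qed.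

Lemma delta3_other i0 j0 k0 i j k : (i,j,k) <> (i0,j0,k0) -> delta3 i0 j0 k0 i j k = 0.
Proof. unfold delta3; repeat destruct Nat.eq_dec; subst; congruence. Qed.

Lemma cl_id N i : in_grid N i -> cl N i = i.
Proof. unfold in_grid, cl; intros; lia. Qed.
Lemma cl_in N i : (1 <= N)%nat -> in_grid N (cl N i).
Proof. unfold in_grid, cl; intros; lia. Qed.
Lemma cl_0 N : (1 <= N)%nat -> cl N 0 = 1%nat.
Proof. unfold cl; intros. rewrite Nat.min_0_r. reflexivity. Qed.
Lemma cl_1 N : (1 <= N)%nat -> cl N 1 = 1%nat.
Proof. intros; apply cl_id; unfold in_grid; lia. Qed.
Lemma cl_N N : (1 <= N)%nat -> cl N N = N.
Proof. intros; apply cl_id; unfold in_grid; lia. Qed.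
Lemma cl_SN N : (1 <= N)%nat -> cl N (S N) = N.
Proof. unfold cl; intros. rewrite Nat.min_l by lia. rewrite Nat.max_r by lia. reflexivity. Qed.

Lemma sumN_opp n f : - sumN n f = sumN n (fun i => - f i).
Proof. induction n; simpl; [lra|rewrite <- IHn; lra]. Qed.

Lemma sbp1 n (phi G : nat -> R) :
  sumN (S n) (fun i => phi i * (G i - G (i - 1)%nat)) =
  phi (S n) * G (S n) - phi 1%nat * G O - sumN n (fun i => (phi (S i) - phi i) * G i).
Proof.
  induction n.
  - simpl. ring.
  - change (sumN (S (S n)) (fun i => phi i * (G i - G (i - 1)%nat)))
      with (sumN (S n) (fun i => phi i * (G i - G (i - 1)%nat)) + phi (S (S n)) * (G (S (S n)) - G (S (S n) - 1)%nat)).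
    rewrite IHn. replace (S (S n) - 1)%nat with (S n) by lia. simpl sumN. ring.
Qed.

Lemma sbp_clamped n (phi G : nat -> R) : (1 <= n)%nat -> G O = 0 -> G n = 0 ->
  sumN n (fun i => phi i * (G i - G (i - 1)%nat)) = - sumN (n - 1) (fun i => (phi (S i) - phi i) * G i).
Proof.
  intros Hn H0 Hn0. destruct n; [lia|]. rewrite sbp1, H0, Hn0.
  replace (S n - 1)%nat with n by lia. ring.
Qed.

Section SBP.
Variable N : nat.
Variable h : R.
Variable D : grid.

Definition Gx (f : grid) i j k := (gext N D (S i) j k + gext N D i j k) / 2 * ((gext N f (S i) j k - gext N f i j k) / h).
Definition Gy (f : grid) i j k := (gext N D i (S j) k + gext N D i j k) / 2 * ((gext N f i (S j) k - gext N f i j k) / h).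
Definition Gz (f : grid) i j k := (gext N D i j (S k) + gext N D i j k) / 2 * ((gext N f i j (S k) - gext N f i j k) / h).

Lemma divDgrad_split f i j k : (1 <= i)%nat -> (1 <= j)%nat -> (1 <= k)%nat ->
  divDgrad N h D f i j k = (Gx f i j k - Gx f (i-1) j k) / h + (Gy f i j k - Gy f i (j-1) k) / h
     + (Gz f i j k - Gz f i j (k-1)) / h.
Proof.
  intros Hi Hj Hk. unfold divDgrad, Gx, Gy, Gz. cbv zeta.
  replace (S (i-1)) with i by lia. replace (S (j-1)) with j by lia. replace (S (k-1)) with k by lia.
  reflexivity.
Qed.

Definition Qx (z f : grid) := sumN N (fun j => sumN N (fun k => sumN (N-1) (fun i =>
   (D (S i) j k + D i j k) / 2 * (z (S i) j k - z i j k) * (f (S i) j k - f i j k)))).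
Definition Qy (z f : grid) := sumN N (fun i => sumN N (fun k => sumN (N-1) (fun j =>
   (D i (S j) k + D i j k) / 2 * (z i (S j) k - z i j k) * (f i (S j) k - f i j k)))).
Definition Qz (z f : grid) := sumN N (fun i => sumN N (fun j => sumN (N-1) (fun k =>
   (D i j (S k) + D i j k) / 2 * (z i j (S k) - z i j k) * (f i j (S k) - f i j k)))).

Hypothesis HN : (1 <= N)%nat.
Hypothesis Hh : h <> 0.

Lemma sbp3 z f : sum3 N (fun i j k => z i j k * divDgrad N h D f i j k) =
  - (Qx z f + Qy z f + Qz z f) / (h * h).
Proof.
  rewrite (sum3_ext N _ (fun i j k => z i j k * ((Gx f i j k - Gx f (i-1) j k) / h)
     + z i j k * ((Gy f i j k - Gy f i (j-1) k) / h) + z i j k * ((Gz f i j k - Gz f i j (k-1)) / h))).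
  2:{ intros i j k Hi Hj Hk. unfold in_grid in *. rewrite divDgrad_split by lia. ring. }
  rewrite !sum3_plus.
  assert (EX : sum3 N (fun i j k => z i j k * ((Gx f i j k - Gx f (i - 1) j k) / h)) = (-1/(h*h)) * Qx z f).
  { unfold sum3, Qx. rewrite sumN_swap.
    rewrite <- (sumN_scal N (-1/(h*h))). apply sumN_ext; intros j Hj.
    rewrite sumN_swap. rewrite <- sumN_scal. apply sumN_ext; intros k Hk.
    rewrite (sumN_ext N _ (fun i => z i j k * (Gx f i j k / h - Gx f (i-1) j k / h))) by (intros; unfold Rdiv; ring).
    rewrite (sbp_clamped N (fun i => z i j k) (fun i => Gx f i j k / h)); auto.
    - rewrite sumN_opp, <- sumN_scal. apply sumN_ext; intros i Hi.
      unfold Gx, gext. rewrite !cl_id by (unfold in_grid; lia). field. auto.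
    - unfold Gx, gext. rewrite cl_0, cl_1 by auto. unfold Rdiv. ring.
    - unfold Gx, gext. rewrite cl_SN, cl_N by auto. unfold Rdiv. ring. }
  assert (EY : sum3 N (fun i j k => z i j k * ((Gy f i j k - Gy f i (j - 1) k) / h)) = (-1/(h*h)) * Qy z f).
  { unfold sum3, Qy.
    rewrite <- (sumN_scal N (-1/(h*h))). apply sumN_ext; intros i Hi.
    rewrite sumN_swap. rewrite <- sumN_scal. apply sumN_ext; intros k Hk.
    rewrite (sumN_ext N _ (fun j => z i j k * (Gy f i j k / h - Gy f i (j-1) k / h))) by (intros; unfold Rdiv; ring).
    rewrite (sbp_clamped N (fun j => z i j k) (fun j => Gy f i j k / h)); auto.
    - rewrite sumN_opp, <- sumN_scal. apply sumN_ext; intros j Hj.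
      unfold Gy, gext. rewrite !cl_id by (unfold in_grid; lia). field. auto.
    - unfold Gy, gext. rewrite cl_0, cl_1 by auto. unfold Rdiv. ring.
    - unfold Gy, gext. rewrite cl_SN, cl_N by auto. unfold Rdiv. ring. }
  assert (EZ : sum3 N (fun i j k => z i j k * ((Gz f i j k - Gz f i j (k - 1)) / h)) = (-1/(h*h)) * Qz z f).
  { unfold sum3, Qz.
    rewrite <- (sumN_scal N (-1/(h*h))). apply sumN_ext; intros i Hi.
    rewrite <- sumN_scal. apply sumN_ext; intros j Hj.
    rewrite (sumN_ext N _ (fun k => z i j k * (Gz f i j k / h - Gz f i j (k-1) / h))) by (intros; unfold Rdiv; ring).
    rewrite (sbp_clamped N (fun k => z i j k) (fun k => Gz f i j k / h)); auto.
    - rewrite sumN_opp, <- sumN_scal. apply sumN_ext; intros k Hk.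
      unfold Gz, gext. rewrite !cl_id by (unfold in_grid; lia). field. auto.
    - unfold Gz, gext. rewrite cl_0, cl_1 by auto. unfold Rdiv. ring.
    - unfold Gz, gext. rewrite cl_SN, cl_N by auto. unfold Rdiv. ring. }
  rewrite EX, EY, EZ. field. auto.
Qed.

Lemma Q_sym z f : Qx z f + Qy z f + Qz z f = Qx f z + Qy f z + Qz f z.
Proof.
  unfold Qx, Qy, Qz. f_equal; [f_equal|]; apply sumN_ext; intros; apply sumN_ext; intros;
  apply sumN_ext; intros; ring.
Qed.

Lemma sbp_sym z f : sum3 N (fun i j k => z i j k * divDgrad N h D f i j k) =
  sum3 N (fun i j k => f i j k * divDgrad N h D z i j k).
Proof. rewrite !sbp3, Q_sym. auto. Qed.

Hypothesis HD : forall i j k, 0 < D i j k.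

Lemma Q_nonneg z : 0 <= Qx z z + Qy z z + Qz z z.
Proof.
  unfold Qx, Qy, Qz.
  assert (forall a b c : R, 0 < a -> 0 < b -> 0 <= (a + b)/2 * c * c).
  { intros. replace ((a + b) / 2 * c * c) with ((a+b)/2 * (c*c)) by ring.
    apply Rmult_le_pos; [lra|nra]. }
  repeat apply Rplus_le_le_0_compat; repeat (apply sumN_nonneg; intros); apply H; auto.
Qed.

Lemma sbp_nonpos z : sum3 N (fun i j k => z i j k * divDgrad N h D z i j k) <= 0.
Proof.
  rewrite sbp3. pose proof (Q_nonneg z).
  assert (0 < h * h) by (destruct (Rlt_or_le 0 h); nra).
  assert (0 <= (Qx z z + Qy z z + Qz z z) / (h*h)) by (unfold Rdiv; apply Rmult_le_pos; [lra|left; apply Rinv_0_lt_compat; lra]).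
  replace (- (Qx z z + Qy z z + Qz z z) / (h * h)) with (- ((Qx z z + Qy z z + Qz z z) / (h * h))) by (unfold Rdiv; ring).
  lra.
Qed.

Lemma sumN_zero_terms n f : (forall i, (1 <= i <= n)%nat -> 0 <= f i) -> sumN n f = 0 ->
  forall i, (1 <= i <= n)%nat -> f i = 0.
Proof.
  intros H H0 i Hi. pose proof (sumN_ge_term n f i H Hi). pose proof (H i Hi). lra.
Qed.

Lemma kernel_const z : sum3 N (fun i j k => z i j k * divDgrad N h D z i j k) = 0 ->
  forall i j k, in_grid N i -> in_grid N j -> in_grid N k -> z i j k = z 1%nat 1%nat 1%nat.
Proof.
  intros H0.
  assert (Hh2 : 0 < h * h) by (destruct (Rlt_or_le 0 h); nra).
  rewrite sbp3 in H0.
  assert (HQ : Qx z z + Qy z z + Qz z z = 0).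
  { apply (Rmult_eq_reg_r (/ (h*h))). 2: apply Rgt_not_eq, Rinv_0_lt_compat; auto.
    unfold Rdiv in H0. lra. }
  assert (T : forall a b c : R, 0 < a -> 0 < b -> 0 <= (a + b)/2 * c * c).
  { intros. replace ((a + b) / 2 * c * c) with ((a+b)/2 * (c*c)) by ring.
    apply Rmult_le_pos; [lra|nra]. }
  assert (T2 : forall a b c : R, 0 < a -> 0 < b -> (a + b)/2 * c * c = 0 -> c = 0).
  { intros a b c Ha Hb Hc. assert (c * c = 0).
    { apply (Rmult_eq_reg_l ((a+b)/2)); [|lra]. rewrite Rmult_0_r, <- Hc; ring. } nra. }
  assert (Nx : 0 <= Qx z z) by (unfold Qx; repeat (apply sumN_nonneg; intros); apply T; auto).
  assert (Ny : 0 <= Qy z z) by (unfold Qy; repeat (apply sumN_nonneg; intros); apply T; auto).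
  assert (Nz : 0 <= Qz z z) by (unfold Qz; repeat (apply sumN_nonneg; intros); apply T; auto).
  assert (Ex : forall i j k, (1 <= i <= N-1)%nat -> in_grid N j -> in_grid N k -> z (S i) j k = z i j k).
  { intros i j k Hi Hj Hk. assert (Qx z z = 0) by lra. unfold Qx in H.
    assert (U1 := sumN_zero_terms _ _ ltac:(intros; apply sumN_nonneg; intros; apply sumN_nonneg; intros; apply T; auto) H j Hj).
    assert (U2 := sumN_zero_terms _ _ ltac:(intros; apply sumN_nonneg; intros; apply T; auto) U1 k Hk).
    assert (U3 := sumN_zero_terms _ _ ltac:(intros; apply T; auto) U2 i Hi).
    clear H U1 U2. rename U3 into H.
    apply T2 in H; auto. lra. }
  assert (Ey : forall i j k, in_grid N i -> (1 <= j <= N-1)%nat -> in_grid N k -> z i (S j) k = z i j k).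
  { intros i j k Hi Hj Hk. assert (Qy z z = 0) by lra. unfold Qy in H.
    assert (U1 := sumN_zero_terms _ _ ltac:(intros; apply sumN_nonneg; intros; apply sumN_nonneg; intros; apply T; auto) H i Hi).
    assert (U2 := sumN_zero_terms _ _ ltac:(intros; apply sumN_nonneg; intros; apply T; auto) U1 k Hk).
    assert (U3 := sumN_zero_terms _ _ ltac:(intros; apply T; auto) U2 j Hj).
    clear H U1 U2. rename U3 into H.
    apply T2 in H; auto. lra. }
  assert (Ez : forall i j k, in_grid N i -> in_grid N j -> (1 <= k <= N-1)%nat -> z i j (S k) = z i j k).
  { intros i j k Hi Hj Hk. assert (Qz z z = 0) by lra. unfold Qz in H.
    assert (U1 := sumN_zero_terms _ _ ltac:(intros; apply sumN_nonneg; intros; apply sumN_nonneg; intros; apply T; auto) H i Hi).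
    assert (U2 := sumN_zero_terms _ _ ltac:(intros; apply sumN_nonneg; intros; apply T; auto) U1 j Hj).
    assert (U3 := sumN_zero_terms _ _ ltac:(intros; apply T; auto) U2 k Hk).
    clear H U1 U2. rename U3 into H.
    apply T2 in H; auto. lra. }
  intros i j k Hi Hj Hk. unfold in_grid in *.
  assert (E1 : forall i, (1 <= i <= N)%nat -> z i j k = z 1%nat j k).
  { induction i0; intros; [lia|]. destruct i0; [auto|].
    rewrite Ex by (unfold in_grid; lia). apply IHi0; lia. }
  assert (E2 : forall j, (1 <= j <= N)%nat -> z 1%nat j k = z 1%nat 1%nat k).
  { induction j0; intros; [lia|]. destruct j0; [auto|].
    rewrite Ey by (unfold in_grid; lia). apply IHj0; lia. }
  assert (E3 : forall k, (1 <= k <= N)%nat -> z 1%nat 1%nat k = z 1%nat 1%nat 1%nat).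
  { induction k0; intros; [lia|]. destruct k0; [auto|].
    rewrite Ez by (unfold in_grid; lia). apply IHk0; lia. }
  rewrite E1, E2, E3; auto.
Qed.
End SBP.

Lemma divDgrad_lin N h D f g t i j k :
  divDgrad N h D (fun i j k => f i j k + t * g i j k) i j k = divDgrad N h D f i j k + t * divDgrad N h D g i j k.
Proof. unfold divDgrad, gext. cbv zeta. unfold Rdiv. ring. Qed.

Lemma divDgrad_minus N h D f g i j k :
  divDgrad N h D (fun i j k => f i j k - g i j k) i j k = divDgrad N h D f i j k - divDgrad N h D g i j k.
Proof. unfold divDgrad, gext. cbv zeta. unfold Rdiv. ring. Qed.

Lemma divDgrad_scal N h D f t i j k :
  divDgrad N h D (fun i j k => t * f i j k) i j k = t * divDgrad N h D f i j k.
Proof. unfold divDgrad, gext. cbv zeta. unfold Rdiv. ring. Qed.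

Lemma divDgrad_const N h D c i j k : divDgrad N h D (fun _ _ _ => c) i j k = 0.
Proof. unfold divDgrad, gext. cbv zeta. unfold Rdiv. ring. Qed.

Lemma divDgrad_ext N h D f g i j k : (forall i j k, f i j k = g i j k) ->
  divDgrad N h D f i j k = divDgrad N h D g i j k.
Proof. intros H. unfold divDgrad, gext. rewrite !H. reflexivity. Qed.

Lemma lap_eq N h f i j k : h <> 0 -> lap N h f i j k = divDgrad N h (fun _ _ _ => 1) f i j k.
Proof. intros. unfold lap, divDgrad, gext. cbv zeta. field. auto. Qed.

Lemma sum_A_zero N h D f : (1 <= N)%nat -> h <> 0 ->
  sum3 N (fun i j k => divDgrad N h D f i j k) = 0.
Proof.
  intros HN Hh.
  rewrite (sum3_ext N _ (fun i j k => (fun _ _ _ => 1) i j k * divDgrad N h D f i j k)) by (intros; ring).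
  rewrite sbp_sym by auto.
  rewrite (sum3_ext N _ (fun _ _ _ => 0)). rewrite sum3_const; ring.
  intros. rewrite divDgrad_const. ring.
Qed.

Definition PT := (grid * grid)%type.

Definition conv (N : nat) (s : nat -> PT) (x : PT) : Prop :=
  forall i j k, in_grid N i -> in_grid N j -> in_grid N k ->
    Un_cv (fun n => fst (s n) i j k) (fst x i j k) /\ Un_cv (fun n => snd (s n) i j k) (snd x i j k).

Definition scont (N : nat) (C : PT -> Prop) (F : PT -> R) : Prop :=
  forall s x, (forall n, C (s n)) -> C x -> conv N s x -> Un_cv (fun n => F (s n)) (F x).

Definition sclosed (N : nat) (C : PT -> Prop) : Prop :=
  forall s x, (forall n, C (s n)) -> conv N s x -> C x.

Definition bnd (N : nat) (C : PT -> Prop) (R0 : R) : Prop :=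
  forall p, C p -> forall i j k, in_grid N i -> in_grid N j -> in_grid N k ->
    Rabs (fst p i j k) <= R0 /\ Rabs (snd p i j k) <= R0.

Lemma inv_small (eps : R) : 0 < eps -> exists N0 : nat, forall n, (N0 <= n)%nat -> / (INR n + 1) < eps.
Proof.
  intros He. destruct (archimed (/ eps)) as [H1 _].
  assert (0 <= up (/ eps))%Z.
  { apply le_IZR. pose proof (Rinv_0_lt_compat _ He). lra. }
  exists (Z.to_nat (up (/ eps))). intros n Hn.
  assert (INR (Z.to_nat (up (/ eps))) = IZR (up (/eps))) by (rewrite INR_IZR_INZ, Z2Nat.id; auto).
  apply le_INR in Hn. rewrite H0 in Hn.
  assert (/ eps < INR n + 1) by lra.
  pose proof (Rinv_0_lt_compat _ He).
  rewrite <- (Rinv_inv eps). apply Rinv_lt_contravar; auto. nra.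
Qed.

Lemma cv_of_bound (u : nat -> R) l : (forall n, Rabs (u n - l) < / (INR n + 1)) -> Un_cv u l.
Proof.
  intros H eps He. destruct (inv_small eps He) as [N0 HN0]. exists N0. intros n Hn.
  unfold Rdist. specialize (H n). specialize (HN0 n ltac:(lia)). lra.
Qed.

Lemma incr_mono (phi : nat -> nat) : (forall n, (phi n < phi (S n))%nat) ->
  forall m n, (m < n)%nat -> (phi m < phi n)%nat.
Proof.
  intros H m n Hmn. induction n; [lia|].
  destruct (Nat.eq_dec m n). subst; auto. specialize (IHn ltac:(lia)). specialize (H n). lia.
Qed.

Lemma incr_ge (phi : nat -> nat) : (forall n, (phi n < phi (S n))%nat) -> forall n, (n <= phi n)%nat.
Proof. intros H n; induction n; [lia|]. specialize (H n). lia. Qed.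

Lemma cv_subseq (u : nat -> R) l phi : (forall n, (phi n < phi (S n))%nat) -> Un_cv u l ->
  Un_cv (fun n => u (phi n)) l.
Proof.
  intros Hphi H eps He. destruct (H eps He) as [N0 HN0]. exists N0. intros n Hn.
  apply HN0. pose proof (incr_ge phi Hphi n). lia.
Qed.

Lemma bw1 (u : nat -> R) R0 : (forall n, Rabs (u n) <= R0) ->
  exists phi : nat -> nat, (forall n, (phi n < phi (S n))%nat) /\ exists l, Un_cv (fun n => u (phi n)) l.
Proof.
  intros Hb.
  destruct (Bolzano_Weierstrass u (fun c => -R0 <= c <= R0) (compact_P3 (-R0) R0)) as [l Hl].
  { intros n. specialize (Hb n). unfold Rabs in Hb; destruct Rcase_abs in Hb; lra. }
  assert (Hex : forall m n : nat, exists p : nat, (S m <= p)%nat /\ Rabs (u p - l) < / (INR n + 1)).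
  { intros m n. assert (Hpos : 0 < / (INR n + 1)) by (apply Rinv_0_lt_compat; pose proof (pos_INR n); lra).
    destruct (Hl (disc l (mkposreal _ Hpos)) (S m)) as [p [Hp1 Hp2]].
    2: exists p; split; auto.
    exists (mkposreal _ Hpos). intros y Hy. exact Hy. }
  set (g := fun m n => epsilon (inhabits 0%nat) (fun p => (S m <= p)%nat /\ Rabs (u p - l) < / (INR n + 1))).
  assert (Hg : forall m n, (S m <= g m n)%nat /\ Rabs (u (g m n) - l) < / (INR n + 1)).
  { intros m n. unfold g. apply (epsilon_spec (inhabits 0%nat) (fun p => (S m <= p)%nat /\ Rabs (u p - l) < / (INR n + 1))). apply Hex. }
  set (phi := fix phi n := match n with O => g O O | S n' => g (phi n') (S n') end).
  exists phi. split.
  - intros n. simpl. destruct (Hg (phi n) (S n)). lia.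
  - exists l. apply cv_of_bound. intros n. destruct n; simpl; apply Hg.
Qed.

Lemma extract (L : list (PT -> R)) (s : nat -> PT) R0 :
  (forall f, In f L -> forall n, Rabs (f (s n)) <= R0) ->
  exists phi : nat -> nat, (forall n, (phi n < phi (S n))%nat) /\
    forall f, In f L -> exists l, Un_cv (fun n => f (s (phi n))) l.
Proof.
  induction L as [|f L IH]; intros Hb.
  - exists (fun n => n). split; [intros; lia|]. intros f [].
  - destruct IH as [phi1 [Hp1 Hc1]]. intros; apply Hb; simpl; auto.
    destruct (bw1 (fun n => f (s (phi1 n))) R0) as [phi2 [Hp2 [l Hl]]].
    intros; apply Hb; simpl; auto.
    exists (fun n => phi1 (phi2 n)). split.
    + intros n. apply incr_mono; auto.
    + intros f' [E|Hin].
      * subst. exists l. auto.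
      * destruct (Hc1 f' Hin) as [l' Hl']. exists l'.
        apply (cv_subseq (fun n => f' (s (phi1 n))) l' phi2); auto.
Qed.

Definition cellsL (N : nat) : list (nat * nat * nat) :=
  flat_map (fun i => flat_map (fun j => map (fun k => (i, j, k)) (seq 1 N)) (seq 1 N)) (seq 1 N).

Lemma in_cellsL N i j k : in_grid N i -> in_grid N j -> in_grid N k -> In (i, j, k) (cellsL N).
Proof.
  unfold in_grid, cellsL; intros Hi Hj Hk.
  apply in_flat_map. exists i. split. apply in_seq; lia.
  apply in_flat_map. exists j. split. apply in_seq; lia.
  apply in_map_iff. exists k. split; auto. apply in_seq; lia.
Qed.

Definition coordsL (N : nat) : list (PT -> R) :=
  map (fun c : nat * nat * nat => fun p : PT => fst p (fst (fst c)) (snd (fst c)) (snd c)) (cellsL N)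
  ++ map (fun c : nat * nat * nat => fun p : PT => snd p (fst (fst c)) (snd (fst c)) (snd c)) (cellsL N).

Lemma coordsL_bound N C R0 (s : nat -> PT) : bnd N C R0 -> (forall n, C (s n)) ->
  forall f, In f (coordsL N) -> forall n, Rabs (f (s n)) <= R0.
Proof.
  intros Hb Hs f Hf n. unfold coordsL in Hf. apply in_app_or in Hf.
  destruct Hf as [Hf|Hf]; apply in_map_iff in Hf; destruct Hf as [[[i j] k] [E Hin]]; subst; simpl;
  unfold cellsL in Hin;
  apply in_flat_map in Hin; destruct Hin as [i' [Hi Hin]];
  apply in_flat_map in Hin; destruct Hin as [j' [Hj Hin]];
  apply in_map_iff in Hin; destruct Hin as [k' [E Hk]]; inversion E; subst;
  apply in_seq in Hi, Hj, Hk; apply (Hb _ (Hs n)); unfold in_grid; lia.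
Qed.

Theorem weier N C F R0 p0 : C p0 -> sclosed N C -> bnd N C R0 -> scont N C F ->
  (exists m, forall p, C p -> m <= F p) ->
  exists p, C p /\ forall q, C q -> F p <= F q.
Proof.
  intros Hp0 Hcl Hb Hc [m Hm].
  set (E := fun r => exists p, C p /\ r = - F p).
  assert (HE1 : bound E). { exists (- m). intros r [p [Hp ->]]. specialize (Hm p Hp). lra. }
  assert (HE2 : exists r, E r). { exists (- F p0). exists p0. auto. }
  destruct (completeness E HE1 HE2) as [M [HM1 HM2]].
  assert (Hlow : forall p, C p -> - M <= F p).
  { intros p Hp. assert (E (- F p)) by (exists p; auto). specialize (HM1 _ H). lra. }
  assert (Hex : forall n : nat, exists p, C p /\ F p < - M + / (INR n + 1)).
  { intros n. apply NNPP. intros Hn.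
    assert (Hpos : 0 < / (INR n + 1)) by (apply Rinv_0_lt_compat; pose proof (pos_INR n); lra).
    assert (is_upper_bound E (M - / (INR n + 1))).
    { intros r [p [Hp ->]]. destruct (Rle_or_lt (- M + / (INR n + 1)) (F p)). lra.
      exfalso; apply Hn; exists p; auto. }
    specialize (HM2 _ H). lra. }
  set (s := fun n => epsilon (inhabits p0) (fun p => C p /\ F p < - M + / (INR n + 1))).
  assert (Hs : forall n, C (s n) /\ F (s n) < - M + / (INR n + 1)).
  { intros n. unfold s. apply (epsilon_spec (inhabits p0) (fun p => C p /\ F p < - M + / (INR n + 1))). apply Hex. }
  destruct (extract (coordsL N) s R0) as [phi [Hphi Hconv]].
  { apply (coordsL_bound N C); auto. intros; apply Hs. }
  set (lim := fun u : nat -> R => epsilon (inhabits 0) (fun l => Un_cv u l)).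
  assert (Hlim : forall u, (exists l, Un_cv u l) -> Un_cv u (lim u)).
  { intros u Hu. unfold lim. apply (epsilon_spec (inhabits 0) (fun l => Un_cv u l)). auto. }
  set (x := ((fun i j k => lim (fun n => fst (s (phi n)) i j k)), (fun i j k => lim (fun n => snd (s (phi n)) i j k)))).
  assert (Hcx : conv N (fun n => s (phi n)) x).
  { intros i j k Hi Hj Hk. split; simpl; apply Hlim.
    - apply (Hconv (fun p : PT => fst p i j k)). unfold coordsL. apply in_or_app. left.
      apply (in_map (fun c : nat * nat * nat => fun p : PT => fst p (fst (fst c)) (snd (fst c)) (snd c)) _ (i,j,k)).
      apply in_cellsL; auto.
    - apply (Hconv (fun p : PT => snd p i j k)). unfold coordsL. apply in_or_app. right.
      apply (in_map (fun c : nat * nat * nat => fun p : PT => snd p (fst (fst c)) (snd (fst c)) (snd c)) _ (i,j,k)).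
      apply in_cellsL; auto. }
  assert (HCx : C x) by (apply (Hcl (fun n => s (phi n))); auto; intros; apply Hs).
  assert (HFx : Un_cv (fun n => F (s (phi n))) (F x)).
  { apply Hc; auto. intros; apply Hs. }
  assert (HFM : Un_cv (fun n => F (s (phi n))) (- M)).
  { apply cv_of_bound. intros n. destruct (Hs (phi n)) as [Hs1 Hs2]. pose proof (Hlow _ Hs1).
    pose proof (incr_ge phi Hphi n). apply le_INR in H0.
    assert (/ (INR (phi n) + 1) <= / (INR n + 1)).
    { apply Rinv_le_contravar. pose proof (pos_INR n); lra. lra. }
    rewrite Rabs_right; lra. }
  pose proof (UL_sequence _ _ _ HFx HFM).
  exists x. split; auto. intros q Hq. rewrite H. apply Hlow; auto.
Qed.

Section SC.
Variable N : nat.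
Variable C : PT -> Prop.

Lemma sc_const c : scont N C (fun _ => c).
Proof. intros s x _ _ _ e He. exists O. intros; unfold Rdist; rewrite Rminus_diag, Rabs_R0; lra. Qed.
Lemma sc_plus F G : scont N C F -> scont N C G -> scont N C (fun p => F p + G p).
Proof. intros HF HG s x H1 H2 H3. apply CV_plus; auto. Qed.
Lemma sc_minus F G : scont N C F -> scont N C G -> scont N C (fun p => F p - G p).
Proof. intros HF HG s x H1 H2 H3. apply CV_minus; auto. Qed.
Lemma sc_mult F G : scont N C F -> scont N C G -> scont N C (fun p => F p * G p).
Proof. intros HF HG s x H1 H2 H3. apply CV_mult; auto. Qed.
Lemma sc_opp F : scont N C F -> scont N C (fun p => - F p).
Proof. intros HF s x H1 H2 H3. apply CV_opp; auto. Qed.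
Lemma sc_div F c : scont N C F -> scont N C (fun p => F p / c).
Proof. intros HF. unfold Rdiv. apply sc_mult; auto. apply sc_const. Qed.
Lemma sc_pow2 F : scont N C F -> scont N C (fun p => F p ^ 2).
Proof. intros HF. simpl. apply sc_mult; auto. apply sc_mult; auto. apply sc_const. Qed.

Hypothesis HN : (1 <= N)%nat.
Lemma sc_fstg i j k : scont N C (fun p => gext N (fst p) i j k).
Proof.
  intros s x H1 H2 H3. unfold gext. apply H3; apply cl_in; auto.
Qed.
Lemma sc_sndg i j k : scont N C (fun p => gext N (snd p) i j k).
Proof.
  intros s x H1 H2 H3. unfold gext. apply H3; apply cl_in; auto.
Qed.
Lemma sc_fst i j k : in_grid N i -> in_grid N j -> in_grid N k -> scont N C (fun p => fst p i j k).
Proof. intros Hi Hj Hk s x H1 H2 H3. apply H3; auto. Qed.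
Lemma sc_snd i j k : in_grid N i -> in_grid N j -> in_grid N k -> scont N C (fun p => snd p i j k).
Proof. intros Hi Hj Hk s x H1 H2 H3. apply H3; auto. Qed.

Lemma sc_comp (g : R -> R) F : scont N C F -> (forall p, C p -> continuity_pt g (F p)) ->
  scont N C (fun p => g (F p)).
Proof.
  intros HF Hg s x H1 H2 H3. apply (continuity_seq g (fun n => F (s n))). apply Hg; auto.
  apply HF; auto.
Qed.

Lemma sc_sum3 (T : nat -> nat -> nat -> PT -> R) :
  (forall i j k, in_grid N i -> in_grid N j -> in_grid N k -> scont N C (T i j k)) ->
  scont N C (fun p => sum3 N (fun i j k => T i j k p)).
Proof.
  intros H s x H1 H2 H3. apply (sum3_cv N (fun i j k m => T i j k (s m)) (fun i j k => T i j k x)).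
  intros; apply H; auto.
Qed.

Ltac sc := repeat first [apply sc_const | apply sc_plus | apply sc_minus | apply sc_mult | apply sc_opp
   | apply sc_div | apply sc_pow2 | apply sc_fstg | apply sc_sndg].

Lemma sc_divD_fst h D i j k : scont N C (fun p => divDgrad N h D (fst p) i j k).
Proof. unfold divDgrad. cbv zeta. sc. Qed.
Lemma sc_divD_snd h D i j k : scont N C (fun p => divDgrad N h D (snd p) i j k).
Proof. unfold divDgrad. cbv zeta. sc. Qed.
End SC.

Lemma sc_weaken N C F : scont N (fun _ => True) F -> scont N C F.
Proof. intros H s x H1 H2 H3. apply H; auto. Qed.

Module P3M.
Import Coquelicot.Coquelicot.
Open Scope R_scope.

Definition Sfun (r x : R) : R := ln x - (x - r) / (2 * x) - (x - r) ^ 2 / (6 * x ^ 2).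
Definition Fe (r x : R) : R := x * ln x - 5/3 * x + 5 * r / 6 * ln x + r ^ 2 / (6 * x).
Definition dS (r x : R) : R := / x - r / (2 * x ^ 2) - (x - r) * r / (3 * x ^ 3).

Lemma Fe_deriv r x : 0 < x -> derivable_pt_lim (Fe r) x (Sfun r x).
Proof.
  intros Hx. apply is_derive_Reals. unfold Fe.
  auto_derive. lra.
  unfold Sfun. field. lra.
Qed.

Lemma Sfun_deriv r x : 0 < x -> derivable_pt_lim (Sfun r) x (dS r x).
Proof.
  intros Hx. apply is_derive_Reals. unfold Sfun.
  auto_derive. repeat split; try nra. 
  unfold dS. field. lra. Qed.

Lemma ln_le_sub1 y : 0 < y -> ln y <= y - 1.
Proof.
  intros Hy. rewrite <- (ln_exp (y - 1)). destruct (Req_dec y (exp (y-1))).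
  rewrite <- H; lra. left. apply ln_increasing; auto.
  pose proof (exp_ineq1_le (y-1)). lra.
Qed.

Lemma ln_ge a x : 0 < a -> 0 < x -> 1 - a / x + ln a <= ln x.
Proof.
  intros Ha Hx. pose proof (ln_le_sub1 (a / x)).
  assert (0 < a / x) by (apply Rdiv_lt_0_compat; auto).
  rewrite ln_div in H by auto. specialize (H H0). lra.
Qed.

Definition Kc (r : R) : R := exp (2/3) - 5 * r / 6 * (1 + ln (r / 10)).

Lemma Fe_lower r x : 0 < r -> 0 < x -> r ^ 2 / (12 * x) - Kc r <= Fe r x.
Proof.
  intros Hr Hx. unfold Fe, Kc.
  pose proof (ln_ge (exp (2/3)) x (exp_pos _) Hx) as H1. rewrite ln_exp in H1.
  assert (Hr10 : 0 < r / 10) by lra.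
  pose proof (ln_ge (r/10) x Hr10 Hx) as H2.
  assert (A1 : x * (1 - exp (2/3) / x + 2/3) <= x * ln x) by (apply Rmult_le_compat_l; lra).
  assert (A2 : 5 * r / 6 * (1 - r / 10 / x + ln (r / 10)) <= 5 * r / 6 * ln x) by (apply Rmult_le_compat_l; lra).
  assert (E1 : x * (1 - exp (2/3) / x + 2/3) = 5/3 * x - exp (2/3)) by (field; lra).
  assert (E2 : 5 * r / 6 * (1 - r / 10 / x + ln (r / 10)) = 5 * r / 6 * (1 + ln (r/10)) - r^2/(12*x)) by (field; lra).
  assert (E3 : r ^ 2 / (6 * x) = 2 * (r^2/(12*x))) by (field; lra).
  lra.
Qed.

Lemma dS_pos r x : 0 < r -> 0 < x -> 0 < dS r x.
Proof.
  intros Hr Hx. unfold dS.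
  assert (E : / x - r / (2 * x ^ 2) - (x - r) * r / (3 * x ^ 3) = (x^2 - 5/6 * r * x + r^2/3) / x ^ 3) by (field; lra).
  rewrite E. apply Rdiv_lt_0_compat. 2: apply pow_lt; auto.
  replace (x ^ 2 - 5 / 6 * r * x + r ^ 2 / 3) with ((x - 5*r/12)*(x-5*r/12) + 23/144 * (r*r)) by field.
  pose proof (Rle_0_sqr (x - 5*r/12)) as Q1; unfold Rsqr in Q1. pose proof (Rmult_lt_0_compat r r Hr Hr). lra.
Qed.

Lemma Sfun_incr r a b : 0 < r -> 0 < a -> a < b -> Sfun r a < Sfun r b.
Proof.
  intros Hr Ha Hab.
  destruct (MVT_cor2 (Sfun r) (dS r) a b Hab) as [c [Hc1 Hc2]].
  intros; apply Sfun_deriv; lra.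
  pose proof (dS_pos r c Hr ltac:(lra)). nra.
Qed.

Lemma Sfun_mono r a b : 0 < r -> 0 < a -> 0 < b -> 0 <= (Sfun r a - Sfun r b) * (a - b).
Proof.
  intros Hr Ha Hb. destruct (Rtotal_order a b) as [H|[H|H]].
  - pose proof (Sfun_incr r a b Hr Ha H). nra.
  - subst; nra.
  - pose proof (Sfun_incr r b a Hr Hb H). nra.
Qed.

Lemma Sfun_mono_eq r a b : 0 < r -> 0 < a -> 0 < b -> (Sfun r a - Sfun r b) * (a - b) = 0 -> a = b.
Proof.
  intros Hr Ha Hb H. destruct (Rtotal_order a b) as [H1|[H1|H1]]; auto.
  - pose proof (Sfun_incr r a b Hr Ha H1). nra.
  - pose proof (Sfun_incr r b a Hr Hb H1). nra.
Qed.

Lemma deriv_loc_v (g r X a c0 chi u C1 dt v e Av : R) : 0 < X -> dt <> 0 ->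
  derivable_pt_lim (fun t => g * Fe r (X + t * a) + c0 / 2 * (X + t * a - r) ^ 2
     - chi / 2 * u * (X + t * a) + C1 - 1 / (2 * dt) * (v + t * e) * (Av + t * a)) 0
   (g * Sfun r X * a + c0 * (X - r) * a - chi / 2 * u * a - 1 / (2 * dt) * (e * Av + v * a)).
Proof.
  intros HX Hdt. apply is_derive_Reals. unfold Fe.
  auto_derive. repeat split; try lra; rewrite Rmult_0_l, Rplus_0_r; lra.
  rewrite Rmult_0_l, Rplus_0_r. unfold Sfun. field. lra.
Qed.

Lemma deriv_loc_u (C0 chi e X kap u mu Lu Le rr : R) :
  derivable_pt_lim (fun t => C0 - chi / 2 * (u + t * e) * X + kap / 2 * (u + t * e) ^ 2
     - mu / 4 * (u + t * e) * (Lu + t * Le) - rr * (u + t * e)) 0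
   (- chi / 2 * e * X + kap * u * e - mu / 4 * (e * Lu + u * Le) - rr * e).
Proof.
  apply is_derive_Reals. auto_derive. auto. field.
Qed.

Lemma deriv_sq (A B : R) :
  derivable_pt_lim (fun t => 1 / 2 * (A + t * B) ^ 2) 0 (A * B).
Proof.
  apply is_derive_Reals. auto_derive. auto. field.
Qed.

Lemma Fe_cont r x : 0 < x -> continuity_pt (Fe r) x.
Proof. intros. apply derivable_continuous_pt. exists (Sfun r x). apply Fe_deriv; auto. Qed.

End P3M.
Import P3M.

Lemma cv_le_const (u : nat -> R) l B : Un_cv u l -> (forall n, u n <= B) -> l <= B.
Proof.
  intros H Hb. destruct (Rle_or_lt l B); auto.
  destruct (H (l - B)) as [n0 Hn0]. lra. specialize (Hn0 n0 (le_n _)). specialize (Hb n0).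
  unfold Rdist in Hn0. unfold Rabs in Hn0; destruct Rcase_abs in Hn0; lra.
Qed.

Lemma cv_const_eq (u : nat -> R) l c : Un_cv u l -> (forall n, u n = c) -> l = c.
Proof.
  intros H Hc. apply (UL_sequence u); auto. intros e He. exists O. intros n _.
  rewrite Hc. unfold Rdist; rewrite Rminus_diag, Rabs_R0; lra.
Qed.

Lemma cv_abs_le (u : nat -> R) l B : Un_cv u l -> (forall n, Rabs (u n) <= B) -> Rabs l <= B.
Proof.
  intros H Hb. apply (cv_le_const (fun n => Rabs (u n))); auto.
  apply (continuity_seq Rabs u l); auto. apply Rcontinuity_abs.
Qed.

Lemma abs_le1 x : x * x <= 1 -> Rabs x <= 1.
Proof. intros H. unfold Rabs; destruct Rcase_abs; nra. Qed.

Definition zg : grid := fun _ _ _ => 0.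

Section Main.
Variables (a b : R) (N : nat) (gamma mu alpha chi theta dt : R) (rho_prev rho_n phi_n : grid).
Hypotheses (Hab : a < b) (HN : (1 <= N)%nat) (Hg : 0 < gamma) (Hmu : 0 < mu) (Hal : 0 < alpha)
  (Hchi : 0 < chi) (Hth : 0 < theta) (Hdt : 0 < dt) (Hrho : grid_pos N rho_n).

Definition hh := mesh a b N.
Definition DD := rhohat dt rho_prev rho_n.
Definition AA (f : grid) := divDgrad N hh DD f.

Lemma hh_pos : 0 < hh.
Proof.
  unfold hh, mesh. apply Rdiv_lt_0_compat. lra. apply lt_0_INR; lia.
Qed.
Lemma hh_neq : hh <> 0.
Proof. pose proof hh_pos; lra. Qed.

Lemma DD_pos : forall i j k, 0 < DD i j k.
Proof.
  intros. unfold DD, rhohat. apply sqrt_lt_R0.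
  assert (0 < dt ^ 8) by (apply pow_lt; auto).
  assert (0 <= (3 / 2 * rho_n i j k - 1 / 2 * rho_prev i j k) ^ 2) by (apply pow2_ge_0). lra.
Qed.

Definition qq (v : grid) : R := - (1 / dt) * sum3 N (fun i j k => v i j k * AA v i j k) + (sum3 N v) ^ 2.

Lemma vAv_nonpos v : sum3 N (fun i j k => v i j k * AA v i j k) <= 0.
Proof. unfold AA. apply sbp_nonpos; auto. apply hh_neq. apply DD_pos. Qed.

Lemma qq_nonneg v : 0 <= qq v.
Proof.
  unfold qq. pose proof (vAv_nonpos v). assert (0 < 1/dt) by (apply Rdiv_lt_0_compat; lra).
  assert (0 <= (sum3 N v)^2) by apply pow2_ge_0. nra.
Qed.

Lemma qq_scal t v : qq (fun i j k => t * v i j k) = t ^ 2 * qq v.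
Proof.
  unfold qq, AA. rewrite (sum3_ext N _ (fun i j k => (t * t) * (v i j k * divDgrad N hh DD v i j k))).
  rewrite sum3_scal, sum3_scal. ring.
  intros. rewrite divDgrad_scal. ring.
Qed.

Lemma sum3_sq_scal t v : sum3 N (fun i j k => (t * v i j k) ^ 2) = t ^ 2 * sum3 N (fun i j k => v i j k ^ 2).
Proof. rewrite <- sum3_scal. apply sum3_ext; intros; ring. Qed.

Lemma qq_coer : exists lam, 0 < lam /\ forall v, lam * sum3 N (fun i j k => v i j k ^ 2) <= qq v.
Proof.
  set (Cs := fun p : PT => (forall i j k, in_grid N i -> in_grid N j -> in_grid N k ->
                Rabs (fst p i j k) <= 1 /\ Rabs (snd p i j k) <= 1)
                /\ sum3 N (fun i j k => fst p i j k ^ 2) = 1).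
  assert (Hin : in_grid N 1) by (unfold in_grid; lia).
  assert (Hs2 : scont N (fun _ => True) (fun p => sum3 N (fun i j k => fst p i j k ^ 2))).
  { apply sc_sum3; intros. apply sc_pow2. apply sc_fst; auto. }
  destruct (weier N Cs (fun p => qq (fst p)) 1 (delta3 1 1 1, zg)) as [ps [Hps Hmin]].
  - split.
    + intros; simpl. split. pose proof (delta3_bound 1 1 1 i j k). rewrite Rabs_right; lra.
      unfold zg; rewrite Rabs_R0; lra.
    + simpl. transitivity (sum3 N (fun i j k => delta3 1 1 1 i j k * delta3 1 1 1 i j k)).
      apply sum3_ext; intros; ring. rewrite sum3_delta by auto.
      unfold delta3; repeat destruct Nat.eq_dec; try congruence; lra.
  - intros s x Hs Hc. split.
    + intros i j k Hi Hj Hk. destruct (Hc i j k Hi Hj Hk) as [H1 H2]. split.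
      apply (cv_abs_le _ _ _ H1). intros; apply (Hs n); auto.
      apply (cv_abs_le _ _ _ H2). intros; apply (Hs n); auto.
    + apply (cv_const_eq (fun n => sum3 N (fun i j k => fst (s n) i j k ^ 2))).
      apply Hs2; auto. intros; apply Hs.
  - intros p Hp. apply Hp.
  - apply sc_weaken. unfold qq, AA. apply sc_plus. apply sc_mult. apply sc_const.
    apply sc_sum3; intros. apply sc_mult. apply sc_fst; auto. apply sc_divD_fst; auto.
    apply sc_pow2. apply sc_sum3; intros; apply sc_fst; auto.
  - exists 0. intros; apply qq_nonneg.
  - exists (qq (fst ps)). split.
    + destruct (qq_nonneg (fst ps)) as [Hl|Hl]; auto. exfalso.
      set (v := fst ps) in *.
      assert (E1 : sum3 N (fun i j k => v i j k * AA v i j k) = 0).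
      { unfold qq in Hl. pose proof (vAv_nonpos v). assert (0 < 1/dt) by (apply Rdiv_lt_0_compat; lra).
        assert (0 <= (sum3 N v)^2) by apply pow2_ge_0.
        destruct H; auto. nra. }
      assert (E2 : sum3 N v = 0).
      { unfold qq in Hl. rewrite E1 in Hl. assert ((sum3 N v) ^ 2 = 0) by lra.
        simpl in H. rewrite Rmult_1_r in H. apply Rmult_integral in H; tauto. }
      pose proof (kernel_const N hh DD HN hh_neq DD_pos v E1) as Hk.
      assert (E3 : sum3 N v = INR N * (INR N * (INR N * v 1%nat 1%nat 1%nat))).
      { rewrite <- sum3_const. apply sum3_ext; intros. apply Hk; auto. }
      assert (INR N <> 0) by (apply not_0_INR; lia).
      assert (v 1%nat 1%nat 1%nat = 0).
      { rewrite E3 in E2. apply Rmult_integral in E2. destruct E2; [contradiction|].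
        apply Rmult_integral in H0. destruct H0; [contradiction|].
        apply Rmult_integral in H0. destruct H0; [contradiction|auto]. }
      destruct Hps as [_ Hps]. fold v in Hps.
      rewrite (sum3_ext N _ (fun _ _ _ => 0)) in Hps. rewrite sum3_const in Hps. lra.
      intros. rewrite Hk; auto. rewrite H0. ring.
    + intros v. set (S := sum3 N (fun i j k => v i j k ^ 2)).
      assert (HS : 0 <= S) by (apply sum3_nonneg; intros; apply pow2_ge_0).
      destruct HS as [HS|HS].
      2:{ rewrite <- HS. rewrite Rmult_0_r. apply qq_nonneg. }
      set (t := / sqrt S).
      assert (Hsq : 0 < sqrt S) by (apply sqrt_lt_R0; auto).
      assert (Ht2 : t ^ 2 * S = 1).
      { unfold t. simpl. rewrite Rmult_1_r. rewrite <- Rinv_mult. rewrite sqrt_sqrt by lra. field. lra. }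
      set (w := fun i j k => t * v i j k).
      assert (Hw : Cs (w, zg)).
      { split.
        - intros i j k Hi Hj Hk. cbn [fst snd]. split; [|unfold zg; rewrite Rabs_R0; lra].
          apply abs_le1. unfold w.
          assert ((t * v i j k) ^ 2 <= sum3 N (fun i j k => (t * v i j k) ^ 2)).
          { apply (sum3_ge_term N (fun i j k => (t * v i j k) ^ 2)); auto. intros; apply pow2_ge_0. }
          rewrite sum3_sq_scal in H. fold S in H. rewrite Ht2 in H. simpl in H. lra.
        - cbn [fst snd]. unfold w. rewrite sum3_sq_scal. fold S. auto. }
      pose proof (Hmin _ Hw). cbn [fst snd] in H. unfold w in H. rewrite qq_scal in H.
      assert (0 < t ^ 2) by (apply pow_lt; unfold t; apply Rinv_0_lt_compat; auto).
      assert (qq v = S * (t^2 * qq v)) by (rewrite <- Rmult_assoc, (Rmult_comm S), Ht2; ring).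
      rewrite H1. rewrite (Rmult_comm (qq (fst ps))). apply Rmult_le_compat_l; lra.
Qed.

Definition c0 := chi ^ 2 * dt / (4 * theta).
Definition kap := theta / dt + alpha / 2.
Definition LL (f : grid) := divDgrad N hh (fun _ _ _ => 1) f.

Lemma LL_nonpos u : sum3 N (fun i j k => u i j k * LL u i j k) <= 0.
Proof. unfold LL. apply sbp_nonpos; auto. apply hh_neq. intros; lra. Qed.

Lemma sum3_zero_terms f : (forall i j k, in_grid N i -> in_grid N j -> in_grid N k -> 0 <= f i j k) ->
  sum3 N f <= 0 -> forall i j k, in_grid N i -> in_grid N j -> in_grid N k -> f i j k = 0.
Proof.
  intros H H0 i j k Hi Hj Hk. pose proof (sum3_ge_term N f i j k H Hi Hj Hk). pose proof (H i j k Hi Hj Hk). lra.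
Qed.

Lemma uniqueness rho1 phi1 rho2 phi2 :
  scheme a b N gamma mu alpha chi theta dt rho_prev rho_n phi_n rho1 phi1 -> grid_pos N rho1 ->
  scheme a b N gamma mu alpha chi theta dt rho_prev rho_n phi_n rho2 phi2 -> grid_pos N rho2 ->
  grid_eq N rho1 rho2 /\ grid_eq N phi1 phi2.
Proof.
  intros S1 P1 S2 P2. unfold scheme in S1, S2. cbv zeta in S1, S2.
  set (w1 := potential gamma chi theta dt rho_n phi_n rho1 phi1) in *.
  set (w2 := potential gamma chi theta dt rho_n phi_n rho2 phi2) in *.
  set (dx := fun i j k => rho1 i j k - rho2 i j k).
  set (du := fun i j k => phi1 i j k - phi2 i j k).
  set (dw := fun i j k => w1 i j k - w2 i j k).
  set (Bd := fun i j k => kap * du i j k - mu / 2 * LL du i j k).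
  set (be := theta / dt).
  assert (Hbe : 0 < be) by (unfold be; apply Rdiv_lt_0_compat; lra).
  assert (Edx : forall i j k, in_grid N i -> in_grid N j -> in_grid N k -> dx i j k = dt * AA dw i j k).
  { intros i j k Hi Hj Hk. destruct (S1 i j k Hi Hj Hk) as [A1 _]. destruct (S2 i j k Hi Hj Hk) as [A2 _].
    unfold dw, AA. rewrite divDgrad_minus. fold (AA w1) (AA w2). unfold AA, DD, hh.
    rewrite <- A1, <- A2. unfold dx. field. lra. }
  assert (Edu : forall i j k, in_grid N i -> in_grid N j -> in_grid N k -> Bd i j k = chi / 2 * dx i j k).
  { intros i j k Hi Hj Hk. destruct (S1 i j k Hi Hj Hk) as [_ B1]. destruct (S2 i j k Hi Hj Hk) as [_ B2].
    rewrite !lap_eq in B1, B2 by apply hh_neq.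
    assert (LL du i j k = divDgrad N (mesh a b N) (fun _ _ _ => 1) (fun i j k => phi1 i j k + phi_n i j k) i j k
              - divDgrad N (mesh a b N) (fun _ _ _ => 1) (fun i j k => phi2 i j k + phi_n i j k) i j k).
    { rewrite <- divDgrad_minus. unfold LL, hh. apply divDgrad_ext. intros; unfold du; ring. }
    unfold Bd. rewrite H. unfold kap, du, dx.
    apply (Rmult_eq_reg_l dt); [|lra].
    assert (E1 : dt * (theta * ((phi1 i j k - phi_n i j k) / dt)) = theta * (phi1 i j k - phi_n i j k)) by (field; lra).
    assert (E2 : dt * (theta * ((phi2 i j k - phi_n i j k) / dt)) = theta * (phi2 i j k - phi_n i j k)) by (field; lra).
    rewrite B1 in E1. rewrite B2 in E2.
    assert (E3 : dt * ((theta / dt + alpha / 2) * (phi1 i j k - phi2 i j k)) = theta * (phi1 i j k - phi2 i j k) + dt * alpha/2 * (phi1 i j k - phi2 i j k)) by (field; lra).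
    nra. }
  assert (Edw : forall i j k, dw i j k = gamma * (Sfun (rho_n i j k) (rho1 i j k) - Sfun (rho_n i j k) (rho2 i j k))
                   - chi / 2 * du i j k + c0 * dx i j k).
  { intros. unfold dw, w1, w2, potential, Shalf, Sfun, c0, du, dx. ring. }
  assert (HP : sum3 N (fun i j k => dx i j k * dw i j k) <= 0).
  { rewrite (sum3_ext N _ (fun i j k => dt * (dw i j k * AA dw i j k))).
    rewrite sum3_scal. pose proof (vAv_nonpos dw). nra.
    intros. rewrite Edx by auto. ring. }
  assert (HBB : 0 <= sum3 N (fun i j k => / be * Bd i j k ^ 2 - du i j k * Bd i j k)).
  { rewrite (sum3_ext N _ (fun i j k => (/ be * (Bd i j k - be * du i j k) ^ 2 + alpha / 2 * du i j k ^ 2) + (- mu / 2) * (du i j k * LL du i j k))).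
    rewrite sum3_plus, sum3_scal. pose proof (LL_nonpos du).
    assert (0 <= sum3 N (fun i j k => / be * (Bd i j k - be * du i j k) ^ 2 + alpha / 2 * du i j k ^ 2)).
    { apply sum3_nonneg; intros. assert (0 < / be) by (apply Rinv_0_lt_compat; auto).
      pose proof (pow2_ge_0 (Bd i j k - be * du i j k)). pose proof (pow2_ge_0 (du i j k)). nra. }
    nra.
    intros. unfold Bd, kap, be. field. lra. }
  assert (HS : sum3 N (fun i j k => gamma * ((Sfun (rho_n i j k) (rho1 i j k) - Sfun (rho_n i j k) (rho2 i j k)) * dx i j k)) <= 0).
  { assert (sum3 N (fun i j k => dx i j k * dw i j k) =
       sum3 N (fun i j k => gamma * ((Sfun (rho_n i j k) (rho1 i j k) - Sfun (rho_n i j k) (rho2 i j k)) * dx i j k))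
       + sum3 N (fun i j k => / be * Bd i j k ^ 2 - du i j k * Bd i j k)).
    { rewrite <- sum3_plus. apply sum3_ext; intros. rewrite Edw.
      assert (dx i j k = 2 / chi * Bd i j k) by (rewrite Edu by auto; field; lra).
      rewrite H2. unfold c0, be. field. lra. }
    lra. }
  assert (HT : forall i j k, in_grid N i -> in_grid N j -> in_grid N k ->
     gamma * ((Sfun (rho_n i j k) (rho1 i j k) - Sfun (rho_n i j k) (rho2 i j k)) * dx i j k) = 0).
  { apply sum3_zero_terms; auto. intros. apply Rmult_le_pos; [lra|]. apply Sfun_mono; auto. }
  assert (Hx : forall i j k, in_grid N i -> in_grid N j -> in_grid N k -> rho1 i j k = rho2 i j k).
  { intros. apply (Sfun_mono_eq (rho_n i j k)); auto. specialize (HT i j k H H0 H1).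
    apply Rmult_integral in HT. destruct HT; [lra|]. unfold dx in H2. auto. }
  split; auto.
  assert (HB0 : forall i j k, in_grid N i -> in_grid N j -> in_grid N k -> Bd i j k = 0).
  { intros. rewrite Edu by auto. unfold dx. rewrite Hx by auto. ring. }
  assert (Hu2 : sum3 N (fun i j k => du i j k ^ 2) <= 0).
  { assert (sum3 N (fun i j k => du i j k * Bd i j k) = 0).
    { rewrite (sum3_ext N _ (fun _ _ _ => 0)). rewrite sum3_const; ring. intros. rewrite HB0 by auto. ring. }
    rewrite (sum3_ext N _ (fun i j k => kap * du i j k ^ 2 + (- mu / 2) * (du i j k * LL du i j k))) in H.
    rewrite sum3_plus, sum3_scal, sum3_scal in H. pose proof (LL_nonpos du).
    assert (0 < kap) by (unfold kap; apply Rplus_lt_0_compat; [apply Rdiv_lt_0_compat|]; lra).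
    assert (0 <= sum3 N (fun i j k => du i j k ^ 2)) by (apply sum3_nonneg; intros; apply pow2_ge_0).
    nra.
    intros. unfold Bd. cbv beta. simpl. field. }
  intros i j k Hi Hj Hk.
  pose proof (sum3_zero_terms (fun i j k => du i j k ^ 2) ltac:(intros; apply pow2_ge_0) Hu2 i j k Hi Hj Hk).
  cbv beta in H. unfold du in H. simpl in H. rewrite Rmult_1_r in H. apply Rmult_integral in H. lra.
Qed.

Definition rr (i j k : nat) := 2 * theta / dt * phi_n i j k + chi / 2 * rho_n i j k.
Definition xg (v : grid) (i j k : nat) := rho_n i j k + AA v i j k.
Definition loc (v u : grid) (i j k : nat) :=
  gamma * Fe (rho_n i j k) (xg v i j k) + c0 / 2 * (xg v i j k - rho_n i j k) ^ 2
  - chi / 2 * u i j k * xg v i j k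
  + (kap / 2 * u i j k ^ 2 - mu / 4 * u i j k * LL u i j k - rr i j k * u i j k)
  - 1 / (2 * dt) * v i j k * AA v i j k.
Definition Kf (p : PT) := sum3 N (loc (fst p) (snd p)) + 1 / 2 * (sum3 N (fst p)) ^ 2.
Definition bb (i j k : nat) := chi / 2 * rho_n i j k + rr i j k.
Definition beta (i j k : nat) := 2 * bb i j k ^ 2 / alpha.

Lemma loc_lb v u i j k :
  loc v u i j k >= gamma * Fe (rho_n i j k) (xg v i j k) + alpha / 8 * u i j k ^ 2 - beta i j k
     - mu / 4 * u i j k * LL u i j k - 1 / (2 * dt) * v i j k * AA v i j k.
Proof.
  unfold loc. set (X := xg v i j k - rho_n i j k). set (U := u i j k).
  replace (xg v i j k) with (X + rho_n i j k) by (unfold X; ring).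
  assert (E1 : c0 / 2 * X ^ 2 - chi / 2 * U * X + theta / (2 * dt) * U ^ 2 = theta / (2 * dt) * (U - chi * dt / (2 * theta) * X) ^ 2)
    by (unfold c0; field; lra).
  assert (E2 : alpha / 8 * U ^ 2 - bb i j k * U + beta i j k = alpha / 8 * (U - 4 * bb i j k / alpha) ^ 2)
    by (unfold beta; field; lra).
  assert (P1 : 0 <= theta / (2 * dt) * (U - chi * dt / (2 * theta) * X) ^ 2).
  { apply Rmult_le_pos. apply Rlt_le, Rdiv_lt_0_compat; lra. apply pow2_ge_0. }
  assert (P2 : 0 <= alpha / 8 * (U - 4 * bb i j k / alpha) ^ 2).
  { apply Rmult_le_pos. lra. apply pow2_ge_0. }
  assert (E3 : kap / 2 * U ^ 2 = theta / (2 * dt) * U ^ 2 + alpha / 4 * U ^ 2) by (unfold kap; field; lra).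
  unfold bb in E2, P2. unfold rr in *. 
  assert (E4 : alpha / 4 * U ^ 2 = alpha / 8 * U ^ 2 + alpha / 8 * U ^ 2) by field.
  lra.
Qed.

Definition Ct := sum3 N (fun i j k => gamma * Rabs (Kc (rho_n i j k)) + beta i j k).

Lemma beta_nonneg i j k : 0 <= beta i j k.
Proof. unfold beta. apply Rmult_le_pos. pose proof (pow2_ge_0 (bb i j k)); lra. apply Rlt_le, Rinv_0_lt_compat; lra. Qed.

Lemma Ct_nonneg : 0 <= Ct.
Proof. unfold Ct. apply sum3_nonneg; intros. pose proof (beta_nonneg i j k). pose proof (Rabs_pos (Kc (rho_n i j k))). nra. Qed.

Definition xpos (v : grid) := forall i j k, in_grid N i -> in_grid N j -> in_grid N k -> 0 < xg v i j k.

Lemma Fe_lb1 i j k x : in_grid N i -> in_grid N j -> in_grid N k -> 0 < x ->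
  - Rabs (Kc (rho_n i j k)) <= Fe (rho_n i j k) x.
Proof.
  intros Hi Hj Hk Hx. pose proof (Fe_lower (rho_n i j k) x (Hrho i j k Hi Hj Hk) Hx).
  assert (0 <= rho_n i j k ^ 2 / (12 * x)).
  { apply Rmult_le_pos. apply pow2_ge_0. apply Rlt_le, Rinv_0_lt_compat; lra. }
  pose proof (Rle_abs (Kc (rho_n i j k))). lra.
Qed.

Lemma Kf_LB (v u : grid) : xpos v ->
  Kf (v, u) >= sum3 N (fun i j k => gamma * Fe (rho_n i j k) (xg v i j k) + alpha / 8 * u i j k ^ 2 - beta i j k)
     + 1 / 2 * qq v.
Proof.
  intros Hx. unfold Kf, qq. cbn [fst snd].
  assert (H1 : sum3 N (loc v u) >= sum3 N (fun i j k => (gamma * Fe (rho_n i j k) (xg v i j k) + alpha / 8 * u i j k ^ 2 - beta i j k)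
     + (- mu / 4) * (u i j k * LL u i j k) + (- 1 / (2 * dt)) * (v i j k * AA v i j k))).
  { apply Rle_ge, sum3_le. intros. pose proof (loc_lb v u i j k). unfold Rdiv in *. lra. }
  rewrite !sum3_plus, !sum3_scal in H1. pose proof (LL_nonpos u).
  assert (0 <= mu / 4 * (- sum3 N (fun i j k => u i j k * LL u i j k))) by (apply Rmult_le_pos; lra).
  replace (-1 / (2 * dt)) with (1 / 2 * (- (1 / dt))) in H1 by (field; lra).
  replace (- mu / 4) with (- (mu / 4)) in H1 by field.
  set (S2 := sum3 N (fun i j k : nat => v i j k * AA v i j k)) in *.
  set (S1 := sum3 N (fun i j k : nat => u i j k * LL u i j k)) in *.
  lra.
Qed.

Lemma Kf_coer lam (v u : grid) : xpos v -> (forall v, lam * sum3 N (fun i j k => v i j k ^ 2) <= qq v) ->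
  alpha / 8 * sum3 N (fun i j k => u i j k ^ 2) + lam / 2 * sum3 N (fun i j k => v i j k ^ 2) - Ct <= Kf (v, u).
Proof.
  intros Hx Hq. pose proof (Kf_LB v u Hx). specialize (Hq v).
  assert (sum3 N (fun i j k => gamma * Fe (rho_n i j k) (xg v i j k) + alpha / 8 * u i j k ^ 2 - beta i j k)
    >= alpha / 8 * sum3 N (fun i j k => u i j k ^ 2) - Ct).
  { unfold Ct. rewrite <- sum3_scal, <- sum3_minus. apply Rle_ge, sum3_le. intros.
    pose proof (Fe_lb1 i j k (xg v i j k) H0 H1 H2 (Hx i j k H0 H1 H2)). nra. }
  set (A1 := sum3 N (fun i j k : nat => u i j k ^ 2)) in *.
  set (A2 := sum3 N (fun i j k : nat => v i j k ^ 2)) in *.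
  set (A3 := sum3 N (fun i j k => gamma * Fe (rho_n i j k) (xg v i j k) + alpha / 8 * u i j k ^ 2 - beta i j k)) in *.
  set (A4 := qq v) in *. set (A5 := Kf (v, u)) in *.
  assert (lam / 2 * A2 = 1/2 * (lam * A2)) by field. lra.
Qed.

Lemma Kf_cell (v u : grid) i0 j0 k0 : xpos v -> in_grid N i0 -> in_grid N j0 -> in_grid N k0 ->
  gamma * Fe (rho_n i0 j0 k0) (xg v i0 j0 k0) - Ct <= Kf (v, u).
Proof.
  intros Hx Hi Hj Hk. pose proof (Kf_LB v u Hx). pose proof (qq_nonneg v).
  set (w := fun i j k => gamma * Fe (rho_n i j k) (xg v i j k) + alpha / 8 * u i j k ^ 2 + gamma * Rabs (Kc (rho_n i j k))).
  assert (Hw : forall i j k, in_grid N i -> in_grid N j -> in_grid N k -> 0 <= w i j k).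
  { intros. unfold w. pose proof (Fe_lb1 i j k (xg v i j k) H1 H2 H3 (Hx i j k H1 H2 H3)).
    pose proof (pow2_ge_0 (u i j k)). nra. }
  assert (E : sum3 N (fun i j k => gamma * Fe (rho_n i j k) (xg v i j k) + alpha / 8 * u i j k ^ 2 - beta i j k)
     = sum3 N w - Ct).
  { unfold Ct. rewrite <- sum3_minus. apply sum3_ext; intros. unfold w. ring. }
  pose proof (sum3_ge_term N w i0 j0 k0 Hw Hi Hj Hk). unfold w in H1 at 1.
  pose proof (pow2_ge_0 (u i0 j0 k0)). pose proof (Rabs_pos (Kc (rho_n i0 j0 k0))).
  rewrite E in H. nra.
Qed.

Lemma AA_lin v e t i j k : AA (fun i j k => v i j k + t * e i j k) i j k = AA v i j k + t * AA e i j k.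
Proof. unfold AA. apply divDgrad_lin. Qed.
Lemma LL_lin v e t i j k : LL (fun i j k => v i j k + t * e i j k) i j k = LL v i j k + t * LL e i j k.
Proof. unfold LL. apply divDgrad_lin. Qed.
Lemma xg_lin v e t i j k : xg (fun i j k => v i j k + t * e i j k) i j k = xg v i j k + t * AA e i j k.
Proof. unfold xg. rewrite AA_lin. ring. Qed.

Lemma dpl_ext (f g : R -> R) x l : (forall t, f t = g t) -> derivable_pt_lim g x l -> derivable_pt_lim f x l.
Proof. intros H H1. replace f with g; auto. apply functional_extensionality; intros; auto. Qed.

Lemma deriv_v (v u e : grid) : xpos v ->
  derivable_pt_lim (fun t => Kf (fun i j k => v i j k + t * e i j k, u)) 0
   (sum3 N (fun i j k => gamma * Sfun (rho_n i j k) (xg v i j k) * AA e i j k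
        + c0 * (xg v i j k - rho_n i j k) * AA e i j k - chi / 2 * u i j k * AA e i j k
        - 1 / (2 * dt) * (e i j k * AA v i j k + v i j k * AA e i j k)) + sum3 N v * sum3 N e).
Proof.
  intros Hx.
  apply (dpl_ext _ (fun t => sum3 N (fun i j k =>
      gamma * Fe (rho_n i j k) (xg v i j k + t * AA e i j k) + c0 / 2 * (xg v i j k + t * AA e i j k - rho_n i j k) ^ 2
     - chi / 2 * u i j k * (xg v i j k + t * AA e i j k)
     + (kap / 2 * u i j k ^ 2 - mu / 4 * u i j k * LL u i j k - rr i j k * u i j k)
     - 1 / (2 * dt) * (v i j k + t * e i j k) * (AA v i j k + t * AA e i j k))
     + 1 / 2 * (sum3 N v + t * sum3 N e) ^ 2)).
  - intros t. unfold Kf. cbn [fst snd]. f_equal.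
    + apply sum3_ext; intros. unfold loc. rewrite xg_lin, AA_lin. reflexivity.
    + rewrite sum3_plus, sum3_scal. reflexivity.
  - apply derivable_pt_lim_plus.
    + apply (sum3_deriv N (fun i j k t =>
        gamma * Fe (rho_n i j k) (xg v i j k + t * AA e i j k) + c0 / 2 * (xg v i j k + t * AA e i j k - rho_n i j k) ^ 2
        - chi / 2 * u i j k * (xg v i j k + t * AA e i j k)
        + (kap / 2 * u i j k ^ 2 - mu / 4 * u i j k * LL u i j k - rr i j k * u i j k)
        - 1 / (2 * dt) * (v i j k + t * e i j k) * (AA v i j k + t * AA e i j k))).
      intros. apply deriv_loc_v; auto. lra.
    + apply deriv_sq.
Qed.

Lemma deriv_u (v u e : grid) :
  derivable_pt_lim (fun t => Kf (v, fun i j k => u i j k + t * e i j k)) 0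
   (sum3 N (fun i j k => - chi / 2 * e i j k * xg v i j k + kap * u i j k * e i j k
        - mu / 4 * (e i j k * LL u i j k + u i j k * LL e i j k) - rr i j k * e i j k)).
Proof.
  apply (dpl_ext _ (fun t => sum3 N (fun i j k =>
      (gamma * Fe (rho_n i j k) (xg v i j k) + c0 / 2 * (xg v i j k - rho_n i j k) ^ 2 - 1 / (2 * dt) * v i j k * AA v i j k)
      - chi / 2 * (u i j k + t * e i j k) * xg v i j k + kap / 2 * (u i j k + t * e i j k) ^ 2
      - mu / 4 * (u i j k + t * e i j k) * (LL u i j k + t * LL e i j k) - rr i j k * (u i j k + t * e i j k))
     + 1 / 2 * (sum3 N v) ^ 2)).
  - intros t. unfold Kf. cbn [fst snd]. f_equal.
    apply sum3_ext; intros. unfold loc. rewrite LL_lin. ring.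
  - replace (sum3 N (fun i j k => - chi / 2 * e i j k * xg v i j k + kap * u i j k * e i j k
        - mu / 4 * (e i j k * LL u i j k + u i j k * LL e i j k) - rr i j k * e i j k))
      with (sum3 N (fun i j k => - chi / 2 * e i j k * xg v i j k + kap * u i j k * e i j k
        - mu / 4 * (e i j k * LL u i j k + u i j k * LL e i j k) - rr i j k * e i j k) + 0) by ring.
    apply derivable_pt_lim_plus.
    + apply (sum3_deriv N (fun i j k t =>
      (gamma * Fe (rho_n i j k) (xg v i j k) + c0 / 2 * (xg v i j k - rho_n i j k) ^ 2 - 1 / (2 * dt) * v i j k * AA v i j k)
      - chi / 2 * (u i j k + t * e i j k) * xg v i j k + kap / 2 * (u i j k + t * e i j k) ^ 2
      - mu / 4 * (u i j k + t * e i j k) * (LL u i j k + t * LL e i j k) - rr i j k * (u i j k + t * e i j k))).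
      intros. apply deriv_loc_u.
    + apply derivable_pt_lim_const.
Qed.

Lemma min_deriv0 (f : R -> R) l eps : 0 < eps -> derivable_pt_lim f 0 l ->
  (forall t, - eps < t < eps -> f 0 <= f t) -> l = 0.
Proof.
  intros He Hd Hm.
  assert (pr : derivable_pt f 0) by (exists l; auto).
  pose proof (deriv_minimum f (- eps) eps 0 pr ltac:(lra) He ltac:(intros; apply Hm; lra)).
  rewrite <- H. symmetry. apply derive_pt_eq_0. auto.
Qed.

Lemma margin (g1 g2 g3 : grid) Ma : 0 <= Ma ->
  (forall i j k, in_grid N i -> in_grid N j -> in_grid N k -> 0 < g1 i j k /\ 0 < g2 i j k /\ 0 < g3 i j k) ->
  exists eps, 0 < eps /\ forall i j k, in_grid N i -> in_grid N j -> in_grid N k ->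
     eps <= g1 i j k /\ eps <= g2 i j k /\ eps * Ma <= g3 i j k.
Proof.
  intros HMa Hg0.
  set (Sg := 1 + sum3 N (fun i j k => / g1 i j k + / g2 i j k + Ma / g3 i j k)).
  assert (Hnn : forall i j k, in_grid N i -> in_grid N j -> in_grid N k -> 0 <= / g1 i j k + / g2 i j k + Ma / g3 i j k).
  { intros. destruct (Hg0 i j k H H0 H1) as [A1 [A2 A3]].
    pose proof (Rinv_0_lt_compat _ A1). pose proof (Rinv_0_lt_compat _ A2).
    assert (0 <= Ma / g3 i j k) by (apply Rmult_le_pos; [lra|apply Rlt_le, Rinv_0_lt_compat; lra]). lra. }
  assert (HSg : 1 <= Sg) by (unfold Sg; pose proof (sum3_nonneg N _ Hnn); lra).
  exists (/ Sg). split. apply Rinv_0_lt_compat; lra.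
  intros i j k Hi Hj Hk. destruct (Hg0 i j k Hi Hj Hk) as [A1 [A2 A3]].
  pose proof (sum3_ge_term N _ i j k Hnn Hi Hj Hk) as Ht. cbv beta in Ht.
  pose proof (Rinv_0_lt_compat _ A1). pose proof (Rinv_0_lt_compat _ A2).
  assert (0 <= Ma / g3 i j k) by (apply Rmult_le_pos; [lra|apply Rlt_le, Rinv_0_lt_compat; lra]).
  assert (B1 : / g1 i j k <= Sg) by (unfold Sg; lra).
  assert (B2 : / g2 i j k <= Sg) by (unfold Sg; lra).
  assert (B3 : Ma / g3 i j k <= Sg) by (unfold Sg; lra).
  repeat split.
  - rewrite <- (Rinv_inv (g1 i j k)). apply Rinv_le_contravar; auto.
  - rewrite <- (Rinv_inv (g2 i j k)). apply Rinv_le_contravar; auto.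
  - apply (Rmult_le_reg_l Sg). lra. rewrite <- Rmult_assoc, Rinv_r by lra.
    apply (Rmult_le_reg_r (/ g3 i j k)). apply Rinv_0_lt_compat; auto.
    rewrite (Rmult_assoc Sg), Rinv_r by lra. unfold Rdiv in B3. lra.
Qed.

Lemma EL_v_simp (v u : grid) i0 j0 k0 : in_grid N i0 -> in_grid N j0 -> in_grid N k0 ->
  let e := delta3 i0 j0 k0 in
  let gg := fun i j k => gamma * Sfun (rho_n i j k) (xg v i j k) + c0 * (xg v i j k - rho_n i j k) - chi / 2 * u i j k in
  sum3 N (fun i j k => gamma * Sfun (rho_n i j k) (xg v i j k) * AA e i j k
        + c0 * (xg v i j k - rho_n i j k) * AA e i j k - chi / 2 * u i j k * AA e i j k
        - 1 / (2 * dt) * (e i j k * AA v i j k + v i j k * AA e i j k)) + sum3 N v * sum3 N e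
  = AA gg i0 j0 k0 - 1 / dt * AA v i0 j0 k0 + sum3 N v.
Proof.
  intros Hi Hj Hk e gg.
  rewrite (sum3_ext N _ (fun i j k => (gg i j k * AA e i j k - 1 / (2 * dt) * (e i j k * AA v i j k))
      - 1 / (2 * dt) * (v i j k * AA e i j k))) by (intros; unfold gg; ring).
  rewrite sum3_minus, sum3_minus, sum3_scal, sum3_scal.
  unfold AA at 1 3. rewrite (sbp_sym N hh DD HN hh_neq gg e), (sbp_sym N hh DD HN hh_neq v e).
  fold (AA gg) (AA v).
  unfold e. rewrite !sum3_delta by auto. rewrite sum3_delta1 by auto. field. lra.
Qed.

Lemma EL_u_simp (v u : grid) i0 j0 k0 : in_grid N i0 -> in_grid N j0 -> in_grid N k0 ->
  let e := delta3 i0 j0 k0 in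
  sum3 N (fun i j k => - chi / 2 * e i j k * xg v i j k + kap * u i j k * e i j k
        - mu / 4 * (e i j k * LL u i j k + u i j k * LL e i j k) - rr i j k * e i j k)
  = - chi / 2 * xg v i0 j0 k0 + kap * u i0 j0 k0 - mu / 2 * LL u i0 j0 k0 - rr i0 j0 k0.
Proof.
  intros Hi Hj Hk e.
  rewrite (sum3_ext N _ (fun i j k => e i j k * (- chi / 2 * xg v i j k + kap * u i j k - mu / 4 * LL u i j k - rr i j k)
      - mu / 4 * (u i j k * LL e i j k))) by (intros; ring).
  rewrite sum3_minus, sum3_scal.
  unfold LL at 2. rewrite (sbp_sym N hh (fun _ _ _ => 1) HN hh_neq u e). fold (LL u).
  unfold e. rewrite !sum3_delta by auto. field.
Qed.

Ltac scK := repeat first [assumption | (apply sc_divD_fst; assumption) | (apply sc_divD_snd; assumption) | apply sc_const | apply sc_plus | apply sc_minus | apply sc_mult | apply sc_opp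
   | apply sc_div | apply sc_pow2 | (apply sc_fst; assumption) | (apply sc_snd; assumption)
   | (apply sc_divD_fst; assumption) | (apply sc_divD_snd; assumption)].

Lemma sc_Kf C : (forall p, C p -> xpos (fst p)) -> scont N C Kf.
Proof.
  intros HC. unfold Kf. apply sc_plus.
  - apply sc_sum3. intros i j k Hi Hj Hk.
    assert (HF : scont N C (fun p => Fe (rho_n i j k) (rho_n i j k + divDgrad N hh DD (fst p) i j k))).
    { apply (sc_comp N C (Fe (rho_n i j k)) (fun p => rho_n i j k + divDgrad N hh DD (fst p) i j k)).
      scK. intros p Hp. apply Fe_cont. apply (HC p Hp); auto. }
    unfold loc, xg, AA, LL. scK.
  - apply sc_mult. apply sc_const. apply sc_pow2. apply (sc_sum3 N C (fun i j k p => fst p i j k)). intros; apply sc_fst; auto.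
Qed.

Lemma cv_ge_const (u : nat -> R) l B : Un_cv u l -> (forall n, B <= u n) -> B <= l.
Proof.
  intros H Hb. destruct (Rle_or_lt B l); auto.
  destruct (H (B - l)) as [n0 Hn0]. lra. specialize (Hn0 n0 (le_n _)). specialize (Hb n0).
  unfold Rdist in Hn0. unfold Rabs in Hn0; destruct Rcase_abs in Hn0; lra.
Qed.

Lemma abs_lt_sq x M : x ^ 2 <= M -> 0 <= M -> Rabs x < 2 + M.
Proof.
  intros H HM. destruct (Rle_or_lt (Rabs x) 1). lra.
  assert (Rabs x ^ 2 = x ^ 2) by (rewrite RPow_abs; apply Rabs_right; apply Rle_ge, pow2_ge_0).
  assert (Rabs x <= Rabs x ^ 2).
  { simpl. rewrite Rmult_1_r. pattern (Rabs x) at 1; rewrite <- Rmult_1_r. apply Rmult_le_compat_l; [apply Rabs_pos|lra]. }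
  lra.
Qed.

Lemma AA_zero i j k : AA zg i j k = 0.
Proof. unfold AA, zg. apply divDgrad_const. Qed.

Lemma existence : exists rho1 phi1 : grid,
  scheme a b N gamma mu alpha chi theta dt rho_prev rho_n phi_n rho1 phi1 /\ grid_pos N rho1.
Proof.
  destruct qq_coer as [lam [Hlam Hq]].
  set (K0 := Kf (zg, zg)).
  set (T := (Rabs K0 + Ct) / gamma).
  assert (HT : 0 <= T) by (unfold T; pose proof Ct_nonneg; pose proof (Rabs_pos K0);
     apply Rmult_le_pos; [lra|apply Rlt_le, Rinv_0_lt_compat; lra]).
  set (dl := fun i j k => Rmin (rho_n i j k) (rho_n i j k ^ 2 / (12 * (T + Rabs (Kc (rho_n i j k)) + 1)))).
  set (R1 := 2 + (8 / alpha + 2 / lam) * (Rabs K0 + Ct)).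
  assert (HKC : 0 <= Rabs K0 + Ct) by (pose proof Ct_nonneg; pose proof (Rabs_pos K0); lra).
  assert (HR1 : 1 <= R1).
  { unfold R1. assert (0 <= 8 / alpha + 2 / lam).
    { assert (0 < 8/alpha) by (apply Rdiv_lt_0_compat; lra). assert (0 < 2/lam) by (apply Rdiv_lt_0_compat; lra). lra. }
    pose proof (Rmult_le_pos _ _ H HKC). lra. }
  assert (Hdl : forall i j k, in_grid N i -> in_grid N j -> in_grid N k ->
     0 < dl i j k /\ dl i j k <= rho_n i j k /\ T + 1 <= Fe (rho_n i j k) (dl i j k)).
  { intros i j k Hi Hj Hk. pose proof (Hrho i j k Hi Hj Hk) as Hr.
    set (M := T + Rabs (Kc (rho_n i j k)) + 1).
    assert (HM : 0 < M) by (unfold M; pose proof (Rabs_pos (Kc (rho_n i j k))); lra).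
    assert (Hq0 : 0 < rho_n i j k ^ 2 / (12 * M)) by (apply Rdiv_lt_0_compat; [apply pow_lt; auto|lra]).
    assert (Hd0 : 0 < dl i j k) by (unfold dl; apply Rmin_glb_lt; auto).
    split; auto. split. apply Rmin_l.
    pose proof (Fe_lower (rho_n i j k) (dl i j k) Hr Hd0).
    assert (Hd1 : dl i j k <= rho_n i j k ^ 2 / (12 * M)) by apply Rmin_r.
    assert (M <= rho_n i j k ^ 2 / (12 * dl i j k)).
    { apply (Rmult_le_reg_r (12 * dl i j k)). lra. unfold Rdiv. rewrite Rmult_assoc, Rinv_l by lra.
      rewrite Rmult_1_r. apply (Rmult_le_reg_r (/ (12 * M))). apply Rinv_0_lt_compat; lra.
      replace (M * (12 * dl i j k) * / (12 * M)) with (dl i j k) by (field; lra). auto. }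
    pose proof (Rle_abs (Kc (rho_n i j k))). unfold M in H0. lra. }
  set (Cs := fun p : PT => forall i j k, in_grid N i -> in_grid N j -> in_grid N k ->
     Rabs (fst p i j k) <= R1 /\ Rabs (snd p i j k) <= R1 /\ dl i j k <= xg (fst p) i j k).
  assert (Hxp : forall p, Cs p -> xpos (fst p)).
  { intros p Hp i j k Hi Hj Hk. destruct (Hp i j k Hi Hj Hk) as [_ [_ H]]. destruct (Hdl i j k Hi Hj Hk). lra. }
  destruct (weier N Cs Kf R1 (zg, zg)) as [ps [Hps Hmin]].
  - intros i j k Hi Hj Hk. cbn [fst snd]. unfold zg at 1 2. rewrite Rabs_R0. split; [lra|split; [lra|]].
    unfold xg. rewrite AA_zero. destruct (Hdl i j k Hi Hj Hk) as [_ [H _]]. lra.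
  - intros s x Hs Hc i j k Hi Hj Hk. destruct (Hc i j k Hi Hj Hk) as [H1 H2]. repeat split.
    + apply (cv_abs_le _ _ _ H1). intros; apply (Hs n); auto.
    + apply (cv_abs_le _ _ _ H2). intros; apply (Hs n); auto.
    + apply (cv_ge_const (fun n => xg (fst (s n)) i j k)). 2: intros; apply (Hs n); auto.
      assert (scont N (fun _ => True) (fun p => xg (fst p) i j k)).
      { unfold xg, AA. apply sc_plus. apply sc_const. apply sc_divD_fst; auto. }
      apply H; auto.
  - intros p Hp i j k Hi Hj Hk. destruct (Hp i j k Hi Hj Hk) as [A1 [A2 _]]. auto.
  - apply sc_Kf; auto.
  - exists (- Ct). intros p Hp. destruct p as [v u].
    pose proof (Kf_coer lam v u (Hxp _ Hp) Hq).
    assert (0 <= sum3 N (fun i j k => u i j k ^ 2)) by (apply sum3_nonneg; intros; apply pow2_ge_0).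
    assert (0 <= sum3 N (fun i j k => v i j k ^ 2)) by (apply sum3_nonneg; intros; apply pow2_ge_0).
    assert (0 <= alpha / 8 * sum3 N (fun i j k => u i j k ^ 2)) by (apply Rmult_le_pos; lra).
    assert (0 <= lam / 2 * sum3 N (fun i j k => v i j k ^ 2)) by (apply Rmult_le_pos; lra).
    lra.
  - destruct ps as [vs us].
    assert (HK : Kf (vs, us) <= K0) by (apply Hmin; unfold K0; 
      intros i j k Hi Hj Hk; cbn [fst snd]; unfold zg at 1 2; rewrite Rabs_R0; split; [lra|split; [lra|]];
      unfold xg; rewrite AA_zero; destruct (Hdl i j k Hi Hj Hk) as [_ [H _]]; lra).
    assert (Hxs : xpos vs) by (apply (Hxp (vs, us)); auto).
    assert (Hstrict : forall i j k, in_grid N i -> in_grid N j -> in_grid N k ->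
       Rabs (vs i j k) < R1 /\ Rabs (us i j k) < R1 /\ dl i j k < xg vs i j k).
    { intros i j k Hi Hj Hk.
      pose proof (Kf_coer lam vs us Hxs Hq) as Hc.
      assert (Su : 0 <= sum3 N (fun i j k => us i j k ^ 2)) by (apply sum3_nonneg; intros; apply pow2_ge_0).
      assert (Sv : 0 <= sum3 N (fun i j k => vs i j k ^ 2)) by (apply sum3_nonneg; intros; apply pow2_ge_0).
      pose proof (sum3_ge_term N (fun i j k => us i j k ^ 2) i j k ltac:(intros; apply pow2_ge_0) Hi Hj Hk) as Tu.
      pose proof (sum3_ge_term N (fun i j k => vs i j k ^ 2) i j k ltac:(intros; apply pow2_ge_0) Hi Hj Hk) as Tv.
      cbv beta in Tu, Tv.
      assert (0 <= alpha / 8 * sum3 N (fun i j k => us i j k ^ 2)) by (apply Rmult_le_pos; lra).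
      assert (0 <= lam / 2 * sum3 N (fun i j k => vs i j k ^ 2)) by (apply Rmult_le_pos; lra).
      pose proof (Rle_abs K0).
      assert (0 < 8 / alpha) by (apply Rdiv_lt_0_compat; lra). assert (0 < 2 / lam) by (apply Rdiv_lt_0_compat; lra).
      split; [|split].
      - assert (vs i j k ^ 2 <= 2 / lam * (Rabs K0 + Ct)).
        { apply (Rmult_le_reg_l (lam / 2)). apply Rdiv_lt_0_compat; lra.
          replace (lam / 2 * (2 / lam * (Rabs K0 + Ct))) with (Rabs K0 + Ct) by (field; lra).
          assert (lam / 2 * vs i j k ^ 2 <= lam / 2 * sum3 N (fun i j k => vs i j k ^ 2)) by (apply Rmult_le_compat_l; lra).
          lra. }
        pose proof (abs_lt_sq (vs i j k) _ H4 ltac:(apply Rmult_le_pos; lra)).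
        pose proof (Rmult_le_pos _ _ (Rlt_le _ _ H2) HKC). unfold R1. lra.
      - assert (us i j k ^ 2 <= 8 / alpha * (Rabs K0 + Ct)).
        { apply (Rmult_le_reg_l (alpha / 8)). apply Rdiv_lt_0_compat; lra.
          replace (alpha / 8 * (8 / alpha * (Rabs K0 + Ct))) with (Rabs K0 + Ct) by (field; lra).
          assert (alpha / 8 * us i j k ^ 2 <= alpha / 8 * sum3 N (fun i j k => us i j k ^ 2)) by (apply Rmult_le_compat_l; lra).
          lra. }
        pose proof (abs_lt_sq (us i j k) _ H4 ltac:(apply Rmult_le_pos; lra)).
        pose proof (Rmult_le_pos _ _ (Rlt_le _ _ H3) HKC). unfold R1. lra.
      - destruct (Hps i j k Hi Hj Hk) as [_ [_ Hd]]. cbn [fst] in Hd. destruct Hd as [Hd|Hd]; auto.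
        exfalso. pose proof (Kf_cell vs us i j k Hxs Hi Hj Hk). rewrite <- Hd in H4.
        destruct (Hdl i j k Hi Hj Hk) as [_ [_ HF]].
        assert (gamma * (T + 1) <= gamma * Fe (rho_n i j k) (dl i j k)) by (apply Rmult_le_compat_l; lra).
        assert (gamma * T = Rabs K0 + Ct) by (unfold T; field; lra). lra. }
    set (gg := fun i j k => gamma * Sfun (rho_n i j k) (xg vs i j k) + c0 * (xg vs i j k - rho_n i j k) - chi / 2 * us i j k).
    assert (Hpert : forall i0 j0 k0, in_grid N i0 -> in_grid N j0 -> in_grid N k0 ->
       exists eps, 0 < eps /\ forall t, - eps < t < eps ->
         Cs (fun i j k => vs i j k + t * delta3 i0 j0 k0 i j k, us) /\
         Cs (vs, fun i j k => us i j k + t * delta3 i0 j0 k0 i j k)).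
    { intros i0 j0 k0 Hi0 Hj0 Hk0. set (e := delta3 i0 j0 k0).
      set (Ma := sum3 N (fun i j k => Rabs (AA e i j k))).
      assert (HMa : 0 <= Ma) by (apply sum3_nonneg; intros; apply Rabs_pos).
      destruct (margin (fun i j k => R1 - Rabs (vs i j k)) (fun i j k => R1 - Rabs (us i j k))
                 (fun i j k => xg vs i j k - dl i j k) Ma HMa) as [eps [Heps Hm]].
      { intros i j k Hi Hj Hk. destruct (Hstrict i j k Hi Hj Hk) as [A1 [A2 A3]]. lra. }
      exists eps. split; auto. intros t Ht.
      assert (Hta : Rabs t < eps) by (unfold Rabs; destruct Rcase_abs; lra).
      assert (He : forall i j k, Rabs (e i j k) <= 1).
      { intros. pose proof (delta3_bound i0 j0 k0 i j k). fold e in H. rewrite Rabs_right; lra. }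
      assert (Hte : forall i j k, Rabs (t * e i j k) <= Rabs t).
      { intros. rewrite Rabs_mult. specialize (He i j k). pose proof (Rabs_pos t).
        pattern (Rabs t) at 2; rewrite <- Rmult_1_r. apply Rmult_le_compat_l; auto. }
      split; intros i j k Hi Hj Hk; cbn [fst snd]; destruct (Hm i j k Hi Hj Hk) as [B1 [B2 B3]];
        destruct (Hps i j k Hi Hj Hk) as [C1 [C2 C3]]; cbn [fst snd] in C1, C2, C3.
      - split; [|split].
        + pose proof (Rabs_triang (vs i j k) (t * e i j k)). pose proof (Hte i j k). lra.
        + auto.
        + rewrite xg_lin. assert (Rabs (AA e i j k) <= Ma).
          { apply (sum3_ge_term N (fun i j k => Rabs (AA e i j k))); auto. intros; apply Rabs_pos. }
          assert (Rabs (t * AA e i j k) <= eps * Ma).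
          { rewrite Rabs_mult. apply Rmult_le_compat; try apply Rabs_pos; lra. }
          pose proof (Rle_abs (- (t * AA e i j k))). rewrite Rabs_Ropp in H1. lra.
      - split; [|split].
        + auto.
        + pose proof (Rabs_triang (us i j k) (t * e i j k)). pose proof (Hte i j k). lra.
        + auto. }
    assert (EL1 : forall i0 j0 k0, in_grid N i0 -> in_grid N j0 -> in_grid N k0 ->
       AA gg i0 j0 k0 - 1 / dt * AA vs i0 j0 k0 + sum3 N vs = 0).
    { intros i0 j0 k0 Hi0 Hj0 Hk0. destruct (Hpert i0 j0 k0 Hi0 Hj0 Hk0) as [eps [Heps Hp]].
      pose proof (deriv_v vs us (delta3 i0 j0 k0) Hxs) as Hd.
      rewrite (EL_v_simp vs us i0 j0 k0 Hi0 Hj0 Hk0) in Hd.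
      apply (min_deriv0 _ _ eps Heps Hd). intros t Ht. cbv beta.
      replace (fun i j k => vs i j k + 0 * delta3 i0 j0 k0 i j k) with vs.
      apply Hmin. apply Hp; auto.
      apply functional_extensionality; intros i; apply functional_extensionality; intros j;
      apply functional_extensionality; intros k. ring. }
    assert (EL2 : forall i0 j0 k0, in_grid N i0 -> in_grid N j0 -> in_grid N k0 ->
       - chi / 2 * xg vs i0 j0 k0 + kap * us i0 j0 k0 - mu / 2 * LL us i0 j0 k0 - rr i0 j0 k0 = 0).
    { intros i0 j0 k0 Hi0 Hj0 Hk0. destruct (Hpert i0 j0 k0 Hi0 Hj0 Hk0) as [eps [Heps Hp]].
      pose proof (deriv_u vs us (delta3 i0 j0 k0)) as Hd.
      rewrite (EL_u_simp vs us i0 j0 k0 Hi0 Hj0 Hk0) in Hd.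
      apply (min_deriv0 _ _ eps Heps Hd). intros t Ht. cbv beta.
      replace (fun i j k => us i j k + 0 * delta3 i0 j0 k0 i j k) with us.
      apply Hmin. apply Hp; auto.
      apply functional_extensionality; intros i; apply functional_extensionality; intros j;
      apply functional_extensionality; intros k. ring. }
    assert (Hsum : sum3 N vs = 0).
    { assert (sum3 N (fun i j k => AA gg i j k + (- (1 / dt)) * AA vs i j k + sum3 N vs) = 0).
      { rewrite (sum3_ext N _ (fun _ _ _ => 0)). rewrite sum3_const; ring.
        intros. rewrite <- (EL1 i j k) by auto. ring. }
      rewrite sum3_plus, sum3_plus, sum3_scal, sum3_const in H.
      unfold AA in H. rewrite !sum_A_zero in H by (auto; apply hh_neq).
      assert (INR N <> 0) by (apply not_0_INR; lia).
      assert (INR N * (INR N * (INR N * sum3 N vs)) = 0) by lra.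
      apply Rmult_integral in H1. destruct H1; [contradiction|].
      apply Rmult_integral in H1. destruct H1; [contradiction|].
      apply Rmult_integral in H1. destruct H1; [contradiction|auto]. }
    exists (xg vs), (fun i j k => us i j k - phi_n i j k). split.
    + unfold scheme. cbv zeta. intros i j k Hi Hj Hk. split.
      * change (divDgrad N (mesh a b N) (rhohat dt rho_prev rho_n)) with AA.
        rewrite (divDgrad_ext N hh DD _ gg).
        2:{ intros. unfold potential, Shalf, gg, Sfun, c0. ring. }
        fold (AA gg). pose proof (EL1 i j k Hi Hj Hk). rewrite Hsum in H.
        assert (AA gg i j k = 1 / dt * AA vs i j k) by lra. rewrite H0.
        unfold xg. field. lra.
      * rewrite lap_eq by apply hh_neq.
        change (divDgrad N (mesh a b N) (fun _ _ _ => 1)) with (divDgrad N hh (fun _ _ _ => 1)).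
        rewrite (divDgrad_ext N hh _ _ us). 2:{ intros; ring. }
        fold (LL us). pose proof (EL2 i j k Hi Hj Hk).
        assert (mu / 2 * LL us i j k = - chi / 2 * xg vs i j k + kap * us i j k - rr i j k) by lra.
        rewrite H0. unfold kap, rr. field. lra.
    + intros i j k Hi Hj Hk. destruct (Hstrict i j k Hi Hj Hk) as [_ [_ H]]. destruct (Hdl i j k Hi Hj Hk). lra.
Qed.
End Main.

Theorem mainTheorem3 (a b : R) (N : nat)
    (gamma mu alpha chi theta dt : R) (rho_prev rho_n phi_n : grid) :
  a < b -> (1 <= N)%nat ->
  0 < gamma -> 0 < mu -> 0 < alpha -> 0 < chi -> 0 < theta -> 0 < dt ->
  grid_pos N rho_n ->
  exists rho1 phi1 : grid,
    scheme a b N gamma mu alpha chi theta dt rho_prev rho_n phi_n rho1 phi1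
    /\ grid_pos N rho1
    /\ (forall rho2 phi2 : grid,
          scheme a b N gamma mu alpha chi theta dt rho_prev rho_n phi_n rho2 phi2 ->
          grid_pos N rho2 ->
          grid_eq N rho1 rho2 /\ grid_eq N phi1 phi2).
Proof.
  intros Hab HN Hg Hmu Hal Hchi Hth Hdt Hrho.
  destruct (existence a b N gamma mu alpha chi theta dt rho_prev rho_n phi_n Hab HN Hg Hmu Hal Hth Hdt Hrho)
    as [rho1 [phi1 [HS HP]]].
  exists rho1, phi1. split; auto. split; auto.
  intros rho2 phi2 HS2 HP2.
  apply (uniqueness a b N gamma mu alpha chi theta dt rho_prev rho_n phi_n Hab HN Hg Hmu Hal Hchi Hth Hdt Hrho); auto.
Qed.
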